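(* Let $M$ be a $(B,A)$-bimodule such that $M_A$ is finitely generated projective, and let $S=\mathrm{End}_A(M)$. Then: (1) If $M$ is a separable bimodule, then the comatrix coring $M^*\otimes_BM$ is a coseparable $A$-coring. (2) If the comatrix coring $M^*\otimes_BM$ is a coseparable $A$-coring, then the Sweedler coring $S\otimes_BS$ is a coseparable $S$-coring.
   Context: All rings are associative with $1$. For a $(B,A)$-bimodule $M$ with $M_A$ finitely generated projective, $M^*=\mathrm{Hom}_A(M,A)$ is an $(A,B)$-bimodule, and with a finite dual basis $\{e_i,e_i^*\}_{i\in I}$ the comatrix $A$-coring is $M^*\otimes_BM$ with coproduct $\varphi\otimes m\mapsto\sum_i\varphi\otimes e_i\otimes e_i^*\otimes m$ and counit $\varphi\otimes m\mapsto\varphi(m)$. $S=\mathrm{End}_A(M)$ with composition, and $B\to S$, $b\mapsto(m\mapsto bm)$. The Sweedler $S$-coring $S\otimes_BS$ has coproduct $s\otimes s'\mapsto s\otimes1_S\otimes s'$ and counit $s\otimes s'\mapsto ss'$. Let ${}^*M=\mathrm{Hom}_B(M,B)$ (left $B$-module maps), an $(A,B)$-bimodule via $(a\varphi)(m)=\varphi(ma)$, $(\varphi b)(m)=\varphi(m)b$; $M$ is a separable bimodule ($B$ is $M$-separable over $A$) if the evaluation map $M\otimes_A{}^*M\to B$, $m\otimes\varphi\mapsto\varphi(m)$, is a split epimorphism of $(B,B)$-bimodules. For an $A$-coring $\mathcal{C}$ with coproduct $\Delta(c)=\sum c_{(1)}\otimes c_{(2)}$ and counit $\varepsilon$, a cointegral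 is an $(A,A)$-bimodule map $\gamma:\mathcal{C}\otimes_A\mathcal{C}\to A$ with $\sum c_{(1)}\gamma(c_{(2)}\otimes c')=\sum\gamma(c\otimes c'_{(1)})c'_{(2)}$ for all $c,c'$ and $\gamma\circ\Delta=\varepsilon$; $\mathcal{C}$ is coseparable if it admits a cointegral (equivalently, $\Delta$ is a split monomorphism of $\mathcal{C}$-bicomodules). *)

(* Defs.v *)
(* Tensor products over (noncommutative) rings are not in the
   library, so they are built here as formal sums (lists of pairs) modulo the
   congruence generated by the defining relations of the tensor product. *)
From mathcomp Require Import all_boot all_algebra.
Set Implicit Arguments.
Unset Strict Implicit.
Unset Printing Implicit Defensive.
Import GRing.Theory.
Local Open Scope ring_scope.

(* X, Y are given as "setoids" (equality eqX, eqY) together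
   with a predicate PX, PY carving out the module inside an ambient type.
   Elements of X (x)_R Y are represented by formal sums s : seq (X * Y)
   (all entries satisfying PX/PY, see allP), and two formal sums denote the
   same element iff they are related by teq. *)
Section Tensor.
Variables (R X Y : Type) (eqX : X -> X -> Prop) (eqY : Y -> Y -> Prop)
  (addX : X -> X -> X) (addY : Y -> Y -> Y) (zeroX : X) (zeroY : Y)
  (ract : X -> R -> X) (lact : R -> Y -> Y) (PX : X -> Prop) (PY : Y -> Prop).

Inductive teq : seq (X * Y) -> seq (X * Y) -> Prop :=
| teq_refl s : teq s s
| teq_sym s t : teq s t -> teq t s
| teq_trans s t u : teq s t -> teq t u -> teq s u
| teq_cat s1 s2 t1 t2 : teq s1 t1 -> teq s2 t2 -> teq (s1 ++ s2) (t1 ++ t2)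
| teq_comm s t : teq (s ++ t) (t ++ s)
| teq_eqv x x' y y' : PX x -> PX x' -> PY y -> PY y' -> eqX x x' -> eqY y y' ->
    teq [:: (x, y)] [:: (x', y')]
| teq_addl x x' y : PX x -> PX x' -> PY y ->
    teq [:: (addX x x', y)] [:: (x, y); (x', y)]
| teq_addr x y y' : PX x -> PY y -> PY y' ->
    teq [:: (x, addY y y')] [:: (x, y); (x, y')]
| teq_zerol y : PY y -> teq [:: (zeroX, y)] [::]
| teq_zeror x : PX x -> teq [:: (x, zeroY)] [::]
| teq_bal x r y : PX x -> PY y -> teq [:: (ract x r, y)] [:: (x, lact r y)].

Fixpoint allP (s : seq (X * Y)) : Prop :=
  match s with
  | [::] => True
  | p :: s' => [/\ PX p.1, PY p.2 & allP s']
  end.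
End Tensor.

(* R is a ring given with its (setoid) equality eqR and carving predicate PR;
   C is an R-bimodule; Delta : C -> C (x)_R C (formal sums) and eps : C -> R.
   A cointegral is an R-bimodule map g : C (x)_R C -> R (given on formal
   sums, well defined w.r.t. teq) with
     sum c_(1) g(c_(2) (x) c') = sum g(c (x) c'_(1)) c'_(2)   and  g o Delta = eps. *)
Section Coring.
Variables (R : Type) (eqR : R -> R -> Prop) (addR : R -> R -> R)
  (mulR : R -> R -> R) (PR : R -> Prop)
  (C : Type) (eqC : C -> C -> Prop) (addC : C -> C -> C) (zeroC : C)
  (lactC : R -> C -> C) (ractC : C -> R -> C) (PC : C -> Prop)
  (Delta : C -> seq (C * C)) (eps : C -> R).

Definition CCeq := teq eqC eqC addC addC zeroC zeroC ractC lactC PC PC.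
Definition CCwf := allP PC PC.
Definition sumC (s : seq C) : C := foldr addC zeroC s.

Definition is_cointegral (g : seq (C * C) -> R) : Prop :=
  (forall u, CCwf u -> PR (g u)) /\
  (forall u v, CCwf u -> CCwf v -> CCeq u v -> eqR (g u) (g v)) /\
  (forall u v, CCwf u -> CCwf v -> eqR (g (u ++ v)) (addR (g u) (g v))) /\
  (forall r c c', PR r -> PC c -> PC c' ->
      eqR (g [:: (lactC r c, c')]) (mulR r (g [:: (c, c')]))) /\
  (forall r c c', PR r -> PC c -> PC c' ->
      eqR (g [:: (c, ractC c' r)]) (mulR (g [:: (c, c')]) r)) /\
  (forall c c', PC c -> PC c' ->
      eqC (sumC [seq ractC p.1 (g [:: (p.2, c')]) | p <- Delta c])
          (sumC [seq lactC (g [:: (c, p.1)]) p.2 | p <- Delta c'])) /\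
  (forall c, PC c -> eqR (g (Delta c)) (eps c)).

Definition coseparable : Prop := exists g, is_cointegral g.
End Coring.

Definition feq (U V : Type) (f g : U -> V) : Prop := forall x, f x = g x.

Definition additive_fun (U V : zmodType) (f : U -> V) : Prop :=
  forall x y, f (x + y) = f x + f y.

Section Concrete.
Variables (A B : pzRingType) (M : zmodType)
  (lB : B -> M -> M) (rA : M -> A -> M).

Definition is_bimodule : Prop :=
  (forall b m m', lB b (m + m') = lB b m + lB b m') /\
  (forall b b' m, lB (b + b') m = lB b m + lB b' m) /\
  (forall b b' m, lB (b * b') m = lB b (lB b' m)) /\
  (forall m, lB 1 m = m) /\
  (forall a m m', rA (m + m') a = rA m a + rA m' a) /\
  (forall a a' m, rA m (a + a') = rA m a + rA m a') /\
  (forall a a' m, rA m (a * a') = rA (rA m a) a') /\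
  (forall m, rA m 1 = m) /\
  (forall b m a, lB b (rA m a) = rA (lB b m) a).

Definition Mdual (f : M -> A) : Prop :=
  additive_fun f /\ forall m a, f (rA m a) = f m * a.
Definition Mldual (g : M -> B) : Prop :=
  additive_fun g /\ forall b m, g (lB b m) = b * g m.
Definition Mend (s : M -> M) : Prop :=
  additive_fun s /\ forall m a, s (rA m a) = rA (s m) a.

(* finite dual basis {e_i, e_i^*} of M_A (witnesses M_A f.g. projective) *)
Definition is_dual_basis (n : nat) (e : 'I_n -> M) (es : 'I_n -> M -> A) : Prop :=
  (forall i, Mdual (es i)) /\ (forall m, \sum_(i < n) rA (e i) (es i m) = m).

(* ---- separable bimodule: ev : M (x)_A *M -> B split epi of (B,B)-bimodules *)
Definition Etens := seq (M * (M -> B)).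
Definition Eeq : Etens -> Etens -> Prop :=
  teq (@eq M) (@feq M B) +%R (fun g h m => g m + h m) 0 (fun _ => 0)
      rA (fun (a : A) (g : M -> B) m => g (rA m a)) (fun _ => True) Mldual.
Definition Ewf : Etens -> Prop := allP (fun _ : M => True) Mldual.
Definition Eev (s : Etens) : B := \sum_(p <- s) p.2 p.1.
Definition Elact (b : B) (s : Etens) : Etens := [seq (lB b p.1, p.2) | p <- s].
Definition Eract (s : Etens) (b : B) : Etens :=
  [seq (p.1, fun m => p.2 m * b) | p <- s].

Definition separable_bimodule : Prop :=
  exists sigma : B -> Etens,
    (forall b, Ewf (sigma b)) /\
    (forall b b', Eeq (sigma (b + b')) (sigma b ++ sigma b')) /\
    (forall b b', Eeq (sigma (b * b')) (Elact b (sigma b'))) /\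
    (forall b b', Eeq (sigma (b * b')) (Eract (sigma b) b')) /\
    (forall b, Eev (sigma b) = b).

Definition comat := seq ((M -> A) * M).
Definition comat_eq : comat -> comat -> Prop :=
  teq (@feq M A) (@eq M) (fun f g m => f m + g m) +%R (fun _ => 0) 0
      (fun (f : M -> A) (b : B) m => f (lB b m)) lB Mdual (fun _ => True).
Definition comat_wf : comat -> Prop := allP Mdual (fun _ : M => True).
Definition comat_lact (a : A) (c : comat) : comat :=
  [seq (fun m => a * p.1 m, p.2) | p <- c].
Definition comat_ract (c : comat) (a : A) : comat :=
  [seq (p.1, rA p.2 a) | p <- c].
Definition comat_Delta n (e : 'I_n -> M) (es : 'I_n -> M -> A) (c : comat)
  : seq (comat * comat) :=
  flatten [seq [seq ([:: (p.1, e i)], [:: (es i, p.2)]) | i <- enum 'I_n] | p <- c].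
Definition comat_eps (c : comat) : A := \sum_(p <- c) p.1 p.2.

Definition comatrix_coseparable n (e : 'I_n -> M) (es : 'I_n -> M -> A) : Prop :=
  coseparable (@eq A) +%R *%R (fun _ => True) comat_eq cat [::]
    comat_lact comat_ract comat_wf (comat_Delta e es) comat_eps.

(* ---- Sweedler S-coring S (x)_B S, S = End_A(M), B -> S, b |-> lB b *)
Definition Sadd (s t : M -> M) : M -> M := fun m => s m + t m.
Definition Szero : M -> M := fun _ => 0.
Definition Smul (s t : M -> M) : M -> M := fun m => s (t m).
Definition swe := seq ((M -> M) * (M -> M)).
Definition swe_eq : swe -> swe -> Prop :=
  teq (@feq M M) (@feq M M) Sadd Sadd Szero Szero
      (fun s (b : B) m => s (lB b m)) (fun (b : B) s m => lB b (s m)) Mend Mend.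
Definition swe_wf : swe -> Prop := allP Mend Mend.
Definition swe_lact (s : M -> M) (d : swe) : swe :=
  [seq (Smul s p.1, p.2) | p <- d].
Definition swe_ract (d : swe) (s : M -> M) : swe :=
  [seq (p.1, Smul p.2 s) | p <- d].
Definition swe_Delta (d : swe) : seq (swe * swe) :=
  [seq ([:: (p.1, fun m => m)], [:: (fun m => m, p.2)]) | p <- d].
Definition swe_eps (d : swe) : M -> M := foldr Sadd Szero [seq Smul p.1 p.2 | p <- d].

Definition sweedler_coseparable : Prop :=
  coseparable (@feq M M) Sadd Smul Mend swe_eq cat [::]
    swe_lact swe_ract swe_wf swe_Delta swe_eps.
End Concrete.

(* Main.v *)
Require Import Defs.
From mathcomp Require Import all_boot all_algebra.
Set Implicit Arguments. Unset Strict Implicit. Unset Printing Implicit Defensive.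
Import GRing.Theory.
Local Open Scope ring_scope.

Fixpoint allq {Z : Type} (P : Z -> Prop) (l : seq Z) : Prop :=
  match l with [::] => True | z :: l' => P z /\ allq P l' end.

Lemma allq_cat {Z : Type} (P : Z -> Prop) l1 l2 : allq P (l1 ++ l2) <-> allq P l1 /\ allq P l2.
Proof. elim: l1 => [|z l IH] /=; first by split => // [[]]. move: IH; tauto. Qed.

Lemma allq_map {Z W : Type} (P : W -> Prop) (f : Z -> W) l : allq P (map f l) <-> allq (fun z => P (f z)) l.
Proof. elim: l => [|z l IH] //=. move: IH; tauto. Qed.

Lemma allq_imp {Z : Type} (P Q : Z -> Prop) l : (forall z, P z -> Q z) -> allq P l -> allq Q l.
Proof. move=> H; elim: l => //= z l IH [] /H ? /IH; tauto. Qed.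

Lemma allq_all {Z : Type} (P : Z -> Prop) l : (forall z, P z) -> allq P l.
Proof. move=> H; elim: l => //= z l IH; split=> //. Qed.

Lemma allq_allP (X Y : Type) (PX : X -> Prop) (PY : Y -> Prop) s :
  Defs.allP PX PY s <-> allq (fun p => PX p.1 /\ PY p.2) s.
Proof. elim: s => [|p s IH] //=. split; [case=> ? ? /IH|case=> [[? ?] /IH]]; by []. Qed.

Lemma allP_cat (X Y : Type) (PX : X -> Prop) (PY : Y -> Prop) s t :
  Defs.allP PX PY s -> Defs.allP PX PY t -> Defs.allP PX PY (s ++ t).
Proof. by elim: s => //= p s IH [H1 H2 H3] Ht; split => //; apply: IH. Qed.

Lemma sum_foldr (V : zmodType) (Z : Type) (F : Z -> V) l :
  foldr +%R 0 [seq F z | z <- l] = \sum_(z <- l) F z.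
Proof. elim: l => [|z l IH] /=; by rewrite ?big_nil ?big_cons ?IH. Qed.

Lemma flatten_map1 (I Z : Type) (f : I -> Z) l : flatten [seq [:: f i] | i <- l] = [seq f i | i <- l].
Proof. by elim: l => //= i l ->. Qed.

Lemma flatten_nils (I Z : Type) (l : seq I) : flatten [seq [::] : seq Z | _ <- l] = [::].
Proof. by elim: l. Qed.

Lemma sumC_cat (T : Type) (s : seq (seq T)) : sumC cat [::] s = flatten s.
Proof. by []. Qed.

Lemma flatten_map_flatten (I J K : Type) (g : J -> seq K) (h : I -> seq J) l :
  flatten (map g (flatten (map h l))) = flatten (map (fun i => flatten (map g (h i))) l).
Proof. by elim: l => //= i l IH; rewrite map_cat flatten_cat IH. Qed.

Lemma flatten_map_single (I J K : Type) (g : J -> seq K) (h : I -> J) (k : I -> K) l :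
  (forall i, g (h i) = [:: k i]) -> flatten (map g (map h l)) = map k l.
Proof. by move=> H; elim: l => //= i l ->; rewrite H. Qed.

Section TeqGen.
Variables (R X Y : Type) (eqX : X -> X -> Prop) (eqY : Y -> Y -> Prop)
  (addX : X -> X -> X) (addY : Y -> Y -> Y) (zeroX : X) (zeroY : Y)
  (ract : X -> R -> X) (lact : R -> Y -> Y) (PX : X -> Prop) (PY : Y -> Prop).
Local Notation T := (teq eqX eqY addX addY zeroX zeroY ract lact PX PY).

Lemma Trefl s : T s s. Proof. exact: teq_refl. Qed.
Lemma Tsym s t : T s t -> T t s. Proof. exact: teq_sym. Qed.
Lemma Ttrans s t u : T s t -> T t u -> T s u. Proof. exact: teq_trans. Qed.
Lemma Tcat s1 s2 t1 t2 : T s1 t1 -> T s2 t2 -> T (s1 ++ s2) (t1 ++ t2). Proof. exact: teq_cat. Qed.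
Lemma Taddr x y y' : PX x -> PY y -> PY y' -> T [:: (x, addY y y')] [:: (x, y); (x, y')].
Proof. exact: teq_addr. Qed.
Lemma Taddl x x' y : PX x -> PX x' -> PY y -> T [:: (addX x x', y)] [:: (x, y); (x', y)].
Proof. exact: teq_addl. Qed.
Lemma Teqv x x' y y' : PX x -> PX x' -> PY y -> PY y' -> eqX x x' -> eqY y y' ->
  T [:: (x, y)] [:: (x', y')].
Proof. exact: teq_eqv. Qed.

Lemma teq_inv (V : zmodType) (f : X -> Y -> V) :
  (forall x x' y y', PX x -> PX x' -> PY y -> PY y' -> eqX x x' -> eqY y y' -> f x y = f x' y') ->
  (forall x x' y, PX x -> PX x' -> PY y -> f (addX x x') y = f x y + f x' y) ->
  (forall x y y', PX x -> PY y -> PY y' -> f x (addY y y') = f x y + f x y') ->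
  (forall y, PY y -> f zeroX y = 0) ->
  (forall x, PX x -> f x zeroY = 0) ->
  (forall x r y, PX x -> PY y -> f (ract x r) y = f x (lact r y)) ->
  forall s t, T s t -> \sum_(p <- s) f p.1 p.2 = \sum_(p <- t) f p.1 p.2.
Proof.
move=> Heq Hl Hr Hzl Hzr Hb s t H; elim: H => //=.
- by move=> ? ? ? _ -> _ ->.
- by move=> s1 s2 t1 t2 _ E1 _ E2; rewrite !big_cat /= E1 E2.
- by move=> s0 t0; rewrite !big_cat /= addrC.
- by move=> x x' y y' ? ? ? ? ? ?; rewrite !big_seq1 /=; apply: Heq.
- by move=> x x' y ? ? ?; rewrite !big_cons !big_nil !addr0 /= Hl.
- by move=> x y y' ? ? ?; rewrite !big_cons !big_nil !addr0 /= Hr.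
- by move=> y ?; rewrite big_seq1 big_nil Hzl.
- by move=> x ?; rewrite big_seq1 big_nil Hzr.
- by move=> x r y ? ?; rewrite !big_seq1 Hb.
Qed.

Lemma teq_swap a b c d : T (a ++ b ++ c ++ d) (a ++ c ++ b ++ d).
Proof.
apply: teq_cat; first exact: teq_refl. rewrite !catA.
apply: teq_cat; [exact: teq_comm | exact: teq_refl].
Qed.

Lemma teq_flatten_cat (I : Type) (a b : I -> seq (X * Y)) l :
  T (flatten [seq a i ++ b i | i <- l])
    (flatten [seq a i | i <- l] ++ flatten [seq b i | i <- l]).
Proof.
elim: l => [|i l IH] /=; first exact: teq_refl.
rewrite -!catA. apply: teq_trans (teq_swap _ _ _ _).
apply: teq_cat; first exact: teq_refl.
apply: teq_cat; first exact: teq_refl. exact: IH.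
Qed.

Lemma teq_exch (I J : Type) (f : I -> J -> X * Y) l1 l2 :
  T (flatten [seq [seq f i j | j <- l2] | i <- l1])
    (flatten [seq [seq f i j | i <- l1] | j <- l2]).
Proof.
elim: l1 => [|i l1 IH] /=; first by rewrite flatten_nils; exact: teq_refl.
apply: teq_sym.
have H := teq_flatten_cat (fun j => [:: f i j]) (fun j => [seq f i0 j | i0 <- l1]) l2.
rewrite flatten_map1 in H. apply: teq_trans H _.
apply: teq_cat; first exact: teq_refl.
exact: teq_sym.
Qed.

Lemma teq_splitr (Z : Type) (Q : Z -> Prop) (F : Z -> Y) x l :
  PX x -> allq Q l -> (forall z, Q z -> PY (F z)) ->
  (forall y y', PY y -> PY y' -> PY (addY y y')) -> PY zeroY ->
  T [:: (x, foldr addY zeroY [seq F z | z <- l])] [seq (x, F z) | z <- l].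
Proof.
move=> Px + HF Hadd H0; elim: l => [|z l IH] /=; first by move=> _; exact: teq_zeror.
case=> Qz Ql.
have Pl : PY (foldr addY zeroY [seq F z | z <- l]).
  by elim: l {IH} Ql => //= z' l' IH' [] /HF ? /IH' ?; apply: Hadd.
apply: Ttrans (Taddr Px (HF _ Qz) Pl) _.
exact: (Tcat (Trefl [:: (x, F z)]) (IH Ql)).
Qed.

Lemma teq_splitl (Z : Type) (Q : Z -> Prop) (F : Z -> X) y l :
  PY y -> allq Q l -> (forall z, Q z -> PX (F z)) ->
  (forall x x', PX x -> PX x' -> PX (addX x x')) -> PX zeroX ->
  T [:: (foldr addX zeroX [seq F z | z <- l], y)] [seq (F z, y) | z <- l].
Proof.
move=> Py + HF Hadd H0; elim: l => [|z l IH] /=; first by move=> _; exact: teq_zerol.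
case=> Qz Ql.
have Pl : PX (foldr addX zeroX [seq F z | z <- l]).
  by elim: l {IH} Ql => //= z' l' IH' [] /HF ? /IH' ?; apply: Hadd.
apply: Ttrans (Taddl (HF _ Qz) Pl Py) _.
exact: (Tcat (Trefl [:: (F z, y)]) (IH Ql)).
Qed.

Lemma teq_flatten (I : Type) (a b : I -> seq (X * Y)) l :
  (forall i, T (a i) (b i)) -> T (flatten [seq a i | i <- l]) (flatten [seq b i | i <- l]).
Proof. move=> H; elim: l => [|i l IH] /=; [exact: teq_refl | exact: teq_cat]. Qed.

Lemma teq_flatten_allq (I : Type) (Q : I -> Prop) (a b : I -> seq (X * Y)) l :
  allq Q l -> (forall i, Q i -> T (a i) (b i)) ->
  T (flatten [seq a i | i <- l]) (flatten [seq b i | i <- l]).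
Proof.
move=> + H; elim: l => [|i l IH] /=; first by move=> _; exact: teq_refl.
by case=> /H Hi /IH Hl; exact: teq_cat.
Qed.

Lemma teq_map_allq (I : Type) (Q : I -> Prop) (f g : I -> X * Y) l :
  allq Q l -> (forall i, Q i -> T [:: f i] [:: g i]) -> T [seq f i | i <- l] [seq g i | i <- l].
Proof.
move=> Hl H; rewrite -(flatten_map1 f) -(flatten_map1 g); exact: (teq_flatten_allq Hl).
Qed.

End TeqGen.

Section TeqHom.
Variables (R X Y : Type) (eqX : X -> X -> Prop) (eqY : Y -> Y -> Prop)
  (addX : X -> X -> X) (addY : Y -> Y -> Y) (zeroX : X) (zeroY : Y)
  (ract : X -> R -> X) (lact : R -> Y -> Y) (PX : X -> Prop) (PY : Y -> Prop).
Variables (R' X' Y' : Type) (eqX' : X' -> X' -> Prop) (eqY' : Y' -> Y' -> Prop)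
  (addX' : X' -> X' -> X') (addY' : Y' -> Y' -> Y') (zeroX' : X') (zeroY' : Y')
  (ract' : X' -> R' -> X') (lact' : R' -> Y' -> Y') (PX' : X' -> Prop) (PY' : Y' -> Prop).
Local Notation T := (teq eqX eqY addX addY zeroX zeroY ract lact PX PY).
Local Notation T' := (teq eqX' eqY' addX' addY' zeroX' zeroY' ract' lact' PX' PY').

Lemma teq_hom (h : X * Y -> X' * Y') :
  (forall x x' y y', PX x -> PX x' -> PY y -> PY y' -> eqX x x' -> eqY y y' ->
     T' [:: h (x, y)] [:: h (x', y')]) ->
  (forall x x' y, PX x -> PX x' -> PY y -> T' [:: h (addX x x', y)] [:: h (x, y); h (x', y)]) ->
  (forall x y y', PX x -> PY y -> PY y' -> T' [:: h (x, addY y y')] [:: h (x, y); h (x, y')]) ->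
  (forall y, PY y -> T' [:: h (zeroX, y)] [::]) ->
  (forall x, PX x -> T' [:: h (x, zeroY)] [::]) ->
  (forall x r y, PX x -> PY y -> T' [:: h (ract x r, y)] [:: h (x, lact r y)]) ->
  forall s t, T s t -> T' (map h s) (map h t).
Proof.
move=> H1 H2 H3 H4 H5 H6 s t H; elim: H => /=; try by eauto.
- by move=> *; exact: teq_refl.
- by move=> *; exact: teq_sym.
- by move=> *; apply: teq_trans; eauto.
- by move=> *; rewrite !map_cat; exact: teq_cat.
- by move=> *; rewrite !map_cat; exact: teq_comm.
Qed.
End TeqHom.

Arguments teq_inv {R X Y eqX eqY addX addY zeroX zeroY ract lact PX PY V} f _ _ _ _ _ _ {s t} _.
Arguments teq_hom {R X Y eqX eqY addX addY zeroX zeroY ract lact PX PY R' X' Y' eqX' eqY' addX' addY' zeroX' zeroY' ract' lact' PX' PY'} h _ _ _ _ _ _ {s t} _.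
Arguments teq_splitr {R X Y eqX eqY addX addY zeroX zeroY ract lact PX PY Z} Q F x l _ _ _ _ _.
Arguments teq_splitl {R X Y eqX eqY addX addY zeroX zeroY ract lact PX PY Z} Q F y l _ _ _ _ _.
Arguments teq_exch {R X Y eqX eqY addX addY zeroX zeroY ract lact PX PY I J} f l1 l2.
Arguments teq_flatten {R X Y eqX eqY addX addY zeroX zeroY ract lact PX PY I} a b l _.
Arguments teq_flatten_cat {R X Y eqX eqY addX addY zeroX zeroY ract lact PX PY I} a b l.
Arguments Trefl {R X Y eqX eqY addX addY zeroX zeroY ract lact PX PY} s.
Arguments Tsym {R X Y eqX eqY addX addY zeroX zeroY ract lact PX PY s t} _.
Arguments Ttrans {R X Y eqX eqY addX addY zeroX zeroY ract lact PX PY s t u} _ _.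
Arguments Tcat {R X Y eqX eqY addX addY zeroX zeroY ract lact PX PY s1 s2 t1 t2} _ _.
Arguments Taddr {R X Y eqX eqY addX addY zeroX zeroY ract lact PX PY x y y'} _ _ _.
Arguments Taddl {R X Y eqX eqY addX addY zeroX zeroY ract lact PX PY x x' y} _ _ _.
Arguments Teqv {R X Y eqX eqY addX addY zeroX zeroY ract lact PX PY x x' y y'} _ _ _ _ _ _.
Arguments teq_flatten_allq {R X Y eqX eqY addX addY zeroX zeroY ract lact PX PY I Q} a b l _ _.
Arguments teq_map_allq {R X Y eqX eqY addX addY zeroX zeroY ract lact PX PY I Q} f g l _ _.


Lemma add0f (U V : zmodType) (f : U -> V) : additive_fun f -> f 0 = 0.
Proof. move=> H; apply: (addrI (f 0)); by rewrite -H !addr0. Qed.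

Lemma add_sumf (U V : zmodType) (f : U -> V) (I : Type) (l : seq I) (g : I -> U) :
  additive_fun f -> f (\sum_(i <- l) g i) = \sum_(i <- l) f (g i).
Proof.
move=> H; elim: l => [|i l IH]; first by rewrite !big_nil add0f.
by rewrite !big_cons H IH.
Qed.

Lemma eq_big_allq (V : zmodType) (I : Type) (P : I -> Prop) (l : seq I) (F G : I -> V) :
  allq P l -> (forall i, P i -> F i = G i) -> \sum_(i <- l) F i = \sum_(i <- l) G i.
Proof.
move=> + H; elim: l => [|i l IH] /=; first by rewrite !big_nil.
by case=> /H Hi /IH Hl; rewrite !big_cons Hi Hl.
Qed.

Section Alg.
Variables (A B : pzRingType) (M : zmodType) (lB : B -> M -> M) (rA : M -> A -> M).
Hypothesis HBM : is_bimodule lB rA.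

Lemma lB_addr b : additive_fun (lB b). Proof. move=> x y; case: HBM => h1 [h2 [h3 [h4 [h5 [h6 [h7 [h8 h9]]]]]]]; exact: h1. Qed.
Lemma lB_addl m : additive_fun (fun b => lB b m). Proof. move=> x y /=; case: HBM => h1 [h2 [h3 [h4 [h5 [h6 [h7 [h8 h9]]]]]]]; exact: h2. Qed.
Lemma lB_mul b b' m : lB (b * b') m = lB b (lB b' m). Proof. case: HBM => h1 [h2 [h3 [h4 [h5 [h6 [h7 [h8 h9]]]]]]]; exact: h3. Qed.
Lemma lB_1 m : lB 1 m = m. Proof. case: HBM => h1 [h2 [h3 [h4 [h5 [h6 [h7 [h8 h9]]]]]]]; exact: h4. Qed.
Lemma rA_addl a : additive_fun (fun m => rA m a). Proof. move=> x y /=; case: HBM => h1 [h2 [h3 [h4 [h5 [h6 [h7 [h8 h9]]]]]]]; exact: h5. Qed.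
Lemma rA_addr m : additive_fun (rA m). Proof. move=> x y; case: HBM => h1 [h2 [h3 [h4 [h5 [h6 [h7 [h8 h9]]]]]]]; exact: h6. Qed.
Lemma rA_mul m a a' : rA m (a * a') = rA (rA m a) a'. Proof. case: HBM => h1 [h2 [h3 [h4 [h5 [h6 [h7 [h8 h9]]]]]]]; exact: h7. Qed.
Lemma rA_1 m : rA m 1 = m. Proof. case: HBM => h1 [h2 [h3 [h4 [h5 [h6 [h7 [h8 h9]]]]]]]; exact: h8. Qed.
Lemma lB_rA b m a : lB b (rA m a) = rA (lB b m) a. Proof. case: HBM => h1 [h2 [h3 [h4 [h5 [h6 [h7 [h8 h9]]]]]]]; exact: h9. Qed.

Lemma lB_Dr b x y : lB b (x + y) = lB b x + lB b y. Proof. exact: lB_addr. Qed.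
Lemma lB_Dl b b' m : lB (b + b') m = lB b m + lB b' m. Proof. exact: (lB_addl m). Qed.
Lemma rA_Dl m m' a : rA (m + m') a = rA m a + rA m' a. Proof. exact: (rA_addl a). Qed.
Lemma rA_Dr m a a' : rA m (a + a') = rA m a + rA m a'. Proof. exact: rA_addr. Qed.

Lemma lB_0r b : lB b 0 = 0. Proof. exact: add0f (lB_addr b). Qed.
Lemma lB_0l m : lB 0 m = 0. Proof. exact: add0f (lB_addl m). Qed.
Lemma rA_0l a : rA 0 a = 0. Proof. exact: add0f (rA_addl a). Qed.
Lemma rA_0r m : rA m 0 = 0. Proof. exact: add0f (rA_addr m). Qed.
Lemma lB_sumr b (I : Type) (l : seq I) g : lB b (\sum_(i <- l) g i) = \sum_(i <- l) lB b (g i).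
Proof. exact: add_sumf (lB_addr b). Qed.
Lemma lB_suml m (I : Type) (l : seq I) g : lB (\sum_(i <- l) g i) m = \sum_(i <- l) lB (g i) m.
Proof. exact: add_sumf (lB_addl m). Qed.
Lemma rA_suml a (I : Type) (l : seq I) g : rA (\sum_(i <- l) g i) a = \sum_(i <- l) rA (g i) a.
Proof. exact: add_sumf (rA_addl a). Qed.
Lemma rA_sumr m (I : Type) (l : seq I) g : rA m (\sum_(i <- l) g i) = \sum_(i <- l) rA m (g i).
Proof. exact: add_sumf (rA_addr m). Qed.

Lemma Mdual_add0 f : Mdual rA f -> f 0 = 0. Proof. by case=> H _; apply: add0f. Qed.
Lemma Mdual_sum f (I : Type) (l : seq I) g : Mdual rA f -> f (\sum_(i <- l) g i) = \sum_(i <- l) f (g i).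
Proof. by case=> H _; apply: add_sumf. Qed.
Lemma Mdual_D f x y : Mdual rA f -> f (x + y) = f x + f y. Proof. by case=> H _; apply: H. Qed.
Lemma Mdual_rA f x a : Mdual rA f -> f (rA x a) = f x * a. Proof. by case=> _ H; apply: H. Qed.

Lemma Mdual_zero : Mdual rA (fun _ => 0).
Proof. by split=> [x y|m a]; rewrite ?addr0 ?mul0r. Qed.
Lemma Mdual_plus f g : Mdual rA f -> Mdual rA g -> Mdual rA (fun m => f m + g m).
Proof.
move=> Hf Hg; split=> [x y|m a]; first by rewrite !Mdual_D // addrACA.
by rewrite !Mdual_rA // mulrDl.
Qed.
Lemma Mdual_lmul a f : Mdual rA f -> Mdual rA (fun m => a * f m).
Proof. move=> Hf; split=> [x y|m a']; by rewrite ?Mdual_D ?Mdual_rA ?mulrDr ?mulrA. Qed.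
Lemma Mdual_lB b f : Mdual rA f -> Mdual rA (fun m => f (lB b m)).
Proof.
move=> Hf; split=> [x y|m a]; first by rewrite lB_addr Mdual_D.
by rewrite lB_rA Mdual_rA.
Qed.
Lemma Mdual_bigsum (I : Type) (P : I -> Prop) (l : seq I) (F : I -> M -> A) :
  allq P l -> (forall i, P i -> Mdual rA (F i)) -> Mdual rA (fun m => \sum_(i <- l) F i m).
Proof.
move=> Hl HF; split=> [x y|m a].
  rewrite -big_split /=; apply: (eq_big_allq Hl) => i /HF Hi; exact: Mdual_D.
rewrite mulr_suml; apply: (eq_big_allq Hl) => i /HF Hi; exact: Mdual_rA.
Qed.

Lemma Mldual_D g x y : Mldual lB g -> g (x + y) = g x + g y. Proof. by case=> H _; apply: H. Qed.
Lemma Mldual_0 g : Mldual lB g -> g 0 = 0. Proof. by case=> H _; apply: add0f. Qed.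
Lemma Mldual_lB g b x : Mldual lB g -> g (lB b x) = b * g x. Proof. by case=> _ H; apply: H. Qed.

Lemma Mldual_sum g (I : Type) (l : seq I) h : Mldual lB g -> g (\sum_(i <- l) h i) = \sum_(i <- l) g (h i).
Proof. by case=> H _; apply: add_sumf. Qed.
Lemma Mend_D s x y : Mend rA s -> s (x + y) = s x + s y. Proof. by case=> H _; apply: H. Qed.
Lemma Mend_0 s : Mend rA s -> s 0 = 0. Proof. by case=> H _; apply: add0f. Qed.
Lemma Mend_rA s x a : Mend rA s -> s (rA x a) = rA (s x) a. Proof. by case=> _ H; apply: H. Qed.
Lemma Mend_sum s (I : Type) (l : seq I) g : Mend rA s -> s (\sum_(i <- l) g i) = \sum_(i <- l) s (g i).
Proof. by case=> H _; apply: add_sumf. Qed.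

Lemma Mend_id : Mend rA (fun m => m). Proof. by []. Qed.
Lemma Mend_comp s t : Mend rA s -> Mend rA t -> Mend rA (fun m => s (t m)).
Proof. move=> Hs Ht; split=> [x y|m a]; by rewrite (Mend_D _ _ Ht) (Mend_D _ _ Hs) || rewrite (Mend_rA _ _ Ht) (Mend_rA _ _ Hs). Qed.
Lemma Mend_add s t : Mend rA s -> Mend rA t -> Mend rA (Sadd s t).
Proof.
move=> Hs Ht; split=> [x y|m a]; rewrite /Sadd.
  by rewrite (Mend_D x y Hs) (Mend_D x y Ht) addrACA.
by rewrite (Mend_rA m a Hs) (Mend_rA m a Ht) (rA_addl a).
Qed.
Lemma Mend_zero : Mend rA (@Szero M). Proof. by split=> [x y|m a]; rewrite /Szero ?addr0 ?rA_0l. Qed.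
Lemma Mend_bigsum (I : Type) (P : I -> Prop) (l : seq I) (F : I -> M -> M) :
  allq P l -> (forall i, P i -> Mend rA (F i)) -> Mend rA (fun m => \sum_(i <- l) F i m).
Proof.
move=> Hl HF; split=> [x y|m a].
  rewrite -big_split /=; apply: (eq_big_allq Hl) => i /HF Hi; exact: Mend_D.
rewrite rA_suml; apply: (eq_big_allq Hl) => i /HF Hi; exact: Mend_rA.
Qed.
Lemma Mend_rAf m f : Mdual rA f -> Mend rA (fun x => rA m (f x)).
Proof.
move=> Hf; split=> [x y|x a]; first by rewrite Mdual_D // rA_addr.
by rewrite Mdual_rA // rA_mul.
Qed.
Lemma Mend_Sf (S : A -> M) f : additive_fun S -> (forall a a', S (a * a') = rA (S a) a') ->
  Mdual rA f -> Mend rA (fun x => S (f x)).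
Proof.
move=> HS HS' Hf; split=> [x y|x a]; first by rewrite Mdual_D // HS.
by rewrite Mdual_rA // HS'.
Qed.

Lemma Mdual_foldr (I : Type) (Q : I -> Prop) (F : I -> M -> A) l :
  allq Q l -> (forall i, Q i -> Mdual rA (F i)) ->
  Mdual rA (foldr (fun f g m => f m + g m) (fun _ => 0) [seq F i | i <- l]).
Proof.
move=> + H; elim: l => [|i l IH] /=; first by move=> _; exact: Mdual_zero.
case=> /H Hi /IH Hl; exact: Mdual_plus.
Qed.
Lemma Mend_foldr (I : Type) (Q : I -> Prop) (F : I -> M -> M) l :
  allq Q l -> (forall i, Q i -> Mend rA (F i)) ->
  Mend rA (foldr (@Sadd M) (@Szero M) [seq F i | i <- l]).
Proof.
move=> + H; elim: l => [|i l IH] /=; first by move=> _; exact: Mend_zero.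
case=> /H Hi /IH Hl; exact: Mend_add.
Qed.

Lemma foldr_Sadd (I : Type) (F : I -> M -> M) l x :
  foldr (@Sadd M) (@Szero M) [seq F i | i <- l] x = \sum_(i <- l) F i x.
Proof. by elim: l => [|i l IH] /=; rewrite ?big_nil ?big_cons // /Sadd IH. Qed.

Lemma foldr_fadd (I : Type) (F : I -> M -> A) l x :
  foldr (fun f g m => f m + g m) (fun _ => 0) [seq F i | i <- l] x = \sum_(i <- l) F i x.
Proof. by elim: l => [|i l IH] /=; rewrite ?big_nil ?big_cons // IH. Qed.

End Alg.


Section Part1.
Variables (A B : pzRingType) (M : zmodType) (lB : B -> M -> M) (rA : M -> A -> M)
  (n : nat) (e : 'I_n -> M) (es : 'I_n -> M -> A).
Hypothesis HBM : is_bimodule lB rA.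
Hypothesis Hdb : is_dual_basis rA e es.
Variable sigma : B -> Etens B M.
Hypothesis Hwf : forall b, Ewf lB (sigma b).
Hypothesis Hlc : forall b b', Eeq lB rA (sigma (b * b')) (Elact lB b (sigma b')).
Hypothesis Hrc : forall b b', Eeq lB rA (sigma (b * b')) (Eract (sigma b) b').
Hypothesis Hev : Eev (sigma 1) = 1.

Lemma es_dual i : Mdual rA (es i). Proof. by case: Hdb. Qed.
Lemma db_sum m : \sum_(i < n) rA (e i) (es i m) = m. Proof. by case: Hdb. Qed.
Lemma db_sum_enum m : \sum_(i <- enum 'I_n) rA (e i) (es i m) = m.
Proof. by rewrite big_enum /= db_sum. Qed.

Lemma e0wf : allq (fun j : M * (M -> B) => Mldual lB j.2) (sigma 1).
Proof. have /allq_allP H := Hwf 1. by apply: allq_imp H => j []. Qed.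

Definition E (m : M) (f : M -> A) : B := \sum_(j <- sigma 1) j.2 (rA m (f j.1)).
Definition ga (phi : M -> A) (m : M) (f : M -> A) (m' : M) : A := phi (lB (E m f) m').
Definition Gc (c c' : comat A M) : A := \sum_(p <- c) \sum_(q <- c') ga p.1 p.2 q.1 q.2.
Definition gam (u : seq (comat A M * comat A M)) : A := \sum_(pr <- u) Gc pr.1 pr.2.

Lemma E_addm m m' f : E (m + m') f = E m f + E m' f.
Proof.
rewrite /E -big_split /=; apply: (eq_big_allq e0wf) => j Hj.
by rewrite (rA_Dl HBM) (Mldual_D _ _ Hj).
Qed.
Lemma E_0m f : E 0 f = 0.
Proof.
rewrite /E (eq_big_allq e0wf (G := fun _ => 0)) ?big1_eq // => j Hj.
by rewrite (rA_0l HBM) (Mldual_0 Hj).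
Qed.
Lemma E_lB b m f : E (lB b m) f = b * E m f.
Proof.
rewrite /E mulr_sumr; apply: (eq_big_allq e0wf) => j Hj.
by rewrite -(lB_rA HBM) (Mldual_lB _ _ Hj).
Qed.
Lemma E_rA m a f : E (rA m a) f = E m (fun x => a * f x).
Proof. by rewrite /E; apply: eq_bigr => j _; rewrite (rA_mul HBM). Qed.
Lemma E_addf m f f' : E m (fun x => f x + f' x) = E m f + E m f'.
Proof.
rewrite /E -big_split /=; apply: (eq_big_allq e0wf) => j Hj.
by rewrite (rA_Dr HBM) (Mldual_D _ _ Hj).
Qed.
Lemma E_0f m : E m (fun _ => 0) = 0.
Proof.
rewrite /E (eq_big_allq e0wf (G := fun _ => 0)) ?big1_eq // => j Hj.
by rewrite (rA_0r HBM) (Mldual_0 Hj).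
Qed.
Lemma E_feq m f f' : feq f f' -> E m f = E m f'.
Proof. by move=> H; rewrite /E; apply: eq_bigr => j _; rewrite H. Qed.

Lemma Ecomm b : Eeq lB rA (Elact lB b (sigma 1)) (Eract (sigma 1) b).
Proof.
apply: Ttrans (Tsym (Hlc b 1)) _. rewrite mulr1 -{1}(mul1r b). exact: Hrc.
Qed.

Lemma E_central m f m' b : Mdual rA f ->
  \sum_(j <- sigma 1) lB (j.2 (rA m (f (lB b j.1)))) m' = lB (E m f) (lB b m').
Proof.
move=> Hf.
have := teq_inv (fun (x : M) (g : M -> B) => lB (g (rA m (f x))) m') _ _ _ _ _ _ (Ecomm b).
rewrite !big_map /= => ->; last first.
- move=> x a g _ Hg /=. by rewrite (Mdual_rA _ _ Hf) (rA_mul HBM).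
- move=> x _ /=. by rewrite (lB_0l HBM).
- move=> g Hg /=. by rewrite (Mdual_add0 Hf) (rA_0r HBM) (Mldual_0 Hg) (lB_0l HBM).
- move=> x g g' _ Hg Hg' /=. by rewrite (lB_Dl HBM).
- move=> x x' g _ _ Hg. by rewrite (Mdual_D _ _ Hf) (rA_Dr HBM) (Mldual_D _ _ Hg) (lB_Dl HBM).
- by move=> x x' g g' _ _ _ _ -> Hgg; rewrite Hgg.
rewrite /E (lB_suml HBM); apply: eq_bigr => j _. by rewrite (lB_mul HBM).
Qed.

Lemma Gc_left c1 c2 c' : comat_eq lB rA c1 c2 -> Gc c1 c' = Gc c2 c'.
Proof.
move=> H; rewrite /Gc.
apply: (teq_inv (fun phi m => \sum_(q <- c') ga phi m q.1 q.2)) _ _ _ _ _ _ H.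
- move=> x x' y y' _ _ _ _ Hx <-; apply: eq_bigr => q _; by rewrite /ga Hx.
- by move=> x x' y _ _ _; rewrite -big_split.
- move=> x y y' Hx _ _; rewrite -big_split; apply: eq_bigr => q _ /=.
  by rewrite /ga E_addm (lB_Dl HBM) (Mdual_D _ _ Hx).
- by move=> y _; rewrite big1.
- move=> x Hx; rewrite big1 // => q _.
  by rewrite /ga E_0m (lB_0l HBM) (Mdual_add0 Hx).
- move=> x r y _ _; apply: eq_bigr => q _.
  by rewrite /ga E_lB (lB_mul HBM).
Qed.

Lemma comat_wf_allq c : comat_wf rA c -> allq (fun p : (M -> A) * M => Mdual rA p.1) c.
Proof. move=> /allq_allP H; by apply: allq_imp H => p []. Qed.

Lemma Gc_right c c1' c2' : comat_wf rA c -> comat_eq lB rA c1' c2' -> Gc c c1' = Gc c c2'.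
Proof.
move=> /comat_wf_allq Hc H; rewrite /Gc (exchange_big _ c c1') (exchange_big _ c c2').
apply: (teq_inv (fun f m' => \sum_(p <- c) ga p.1 p.2 f m')) _ _ _ _ _ _ H.
- move=> x x' y y' _ _ _ _ Hx <-; apply: eq_bigr => q _; by rewrite /ga (E_feq _ Hx).
- move=> x x' y _ _ _; rewrite -big_split; apply: (eq_big_allq Hc) => p Hp /=.
  by rewrite /ga E_addf (lB_Dl HBM) (Mdual_D _ _ Hp).
- move=> x y y' _ _ _; rewrite -big_split; apply: (eq_big_allq Hc) => p Hp /=.
  by rewrite /ga (lB_Dr HBM) (Mdual_D _ _ Hp).
- move=> y _; rewrite (eq_big_allq Hc (G := fun _ => 0)) ?big1_eq // => p Hp.
  by rewrite /ga E_0f (lB_0l HBM) (Mdual_add0 Hp).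
- move=> x _; rewrite (eq_big_allq Hc (G := fun _ => 0)) ?big1_eq // => p Hp.
  by rewrite /ga (lB_0r HBM) (Mdual_add0 Hp).
- move=> x r y Hx _; apply: eq_bigr => p _.
  by rewrite /ga -E_central // /E (lB_suml HBM).
Qed.

Lemma Gc_ccinv u v : CCeq (comat_eq lB rA) cat [::] (@comat_lact A M) (comat_ract rA) (comat_wf rA) u v ->
  gam u = gam v.
Proof.
move=> H; rewrite /gam.
apply: (teq_inv (fun c c' => Gc c c')) _ _ _ _ _ _ H.
- move=> x x' y y' _ Px' _ _ Hx Hy. by rewrite (Gc_left _ Hx) (Gc_right Px' Hy).
- by move=> x x' y _ _ _; rewrite /Gc big_cat.
- by move=> x y y' _ _ _; rewrite /Gc -big_split; apply: eq_bigr => p _; rewrite big_cat.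
- by move=> y _; rewrite /Gc big_nil.
- by move=> x _; rewrite /Gc big1 // => p _; rewrite big_nil.
- move=> x r y _ _; rewrite /Gc big_map; apply: eq_bigr => p _.
  rewrite big_map; apply: eq_bigr => q _. by rewrite /ga E_rA.
Qed.

Lemma sumE1 : \sum_(i <- enum 'I_n) E (e i) (es i) = 1.
Proof.
rewrite -[RHS]Hev /E exchange_big /= /Eev; apply: (eq_big_allq e0wf) => j Hj.
by rewrite -(Mldual_sum _ _ Hj) db_sum_enum.
Qed.

Lemma gam_counit c : comat_wf rA c -> gam (comat_Delta e es c) = comat_eps c.
Proof.
move=> /comat_wf_allq Hc.
rewrite /gam /comat_Delta big_flatten big_map /comat_eps. apply: (eq_big_allq Hc) => p Hp.
rewrite big_map /=.
rewrite (eq_bigr (fun i => p.1 (lB (E (e i) (es i)) p.2))); last first.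
  by move=> i _; rewrite /Gc !big_seq1.
by rewrite -(Mdual_sum _ _ Hp) -(lB_suml HBM) sumE1 (lB_1 HBM).
Qed.

Lemma gam_lact r c c' : gam [:: (comat_lact r c, c')] = r * gam [:: (c, c')].
Proof.
rewrite /gam !big_seq1 /Gc big_map mulr_sumr; apply: eq_bigr => p _.
by rewrite mulr_sumr.
Qed.

Lemma gam_ract r c c' : comat_wf rA c -> gam [:: (c, comat_ract rA c' r)] = gam [:: (c, c')] * r.
Proof.
move=> /comat_wf_allq Hc; rewrite /gam !big_seq1 /Gc mulr_suml; apply: (eq_big_allq Hc) => p Hp.
rewrite big_map mulr_suml; apply: eq_bigr => q _.
by rewrite /ga (lB_rA HBM) (Mdual_rA _ _ Hp).
Qed.

Lemma gam_coassoc c c' : comat_wf rA c -> comat_wf rA c' ->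
  comat_eq lB rA (sumC cat [::] [seq comat_ract rA p.1 (gam [:: (p.2, c')]) | p <- comat_Delta e es c])
    (sumC cat [::] [seq comat_lact (gam [:: (c, p.1)]) p.2 | p <- comat_Delta e es c']).
Proof.
move=> Hcw Hcw'; have Hc := comat_wf_allq Hcw.
rewrite !sumC_cat /comat_Delta !flatten_map_flatten.
pose f := fun (p q : (M -> A) * M) => (p.1, lB (E p.2 q.1) q.2).
apply: (Ttrans (t := flatten [seq [seq f p q | q <- c'] | p <- c])).
  apply: (teq_flatten_allq _ (fun p => [seq f p q | q <- c']) c Hc) => p Hp.
  set y := \sum_(q <- c') lB (E p.2 q.1) q.2.
  rewrite (flatten_map_single (k := fun i => (p.1, rA (e i) (es i y)))); last first.
    by move=> i /=; rewrite /gam !big_seq1 /Gc big_seq1 (Mdual_sum _ _ (es_dual i)).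
  apply: Ttrans (Tsym (teq_splitr (fun _ : 'I_n => True) (fun i => rA (e i) (es i y)) p.1
     (enum 'I_n) Hp (allq_all _ (fun _ => I)) (fun _ _ => I) (fun _ _ _ _ => I) I)) _.
  apply: Ttrans _ (teq_splitr (fun _ => True) (fun q => lB (E p.2 q.1) q.2) p.1
     c' Hp (allq_all _ (fun _ => I)) (fun _ _ => I) (fun _ _ _ _ => I) I).
  rewrite !sum_foldr db_sum_enum; exact: Trefl.
apply: Ttrans (teq_exch f c c') _. apply: Tsym.
apply: (teq_flatten_allq _ _ c' (allq_all (P := fun _ => True) _ (fun _ => I))) => q _.
rewrite (flatten_map_single (k := fun i => (fun x => gam [:: (c, [:: (q.1, e i)])] * es i x, q.2))) //.
eapply Ttrans; first (apply: Tsym; apply: (teq_splitl (fun _ : 'I_n => True)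
   (fun i x => gam [:: (c, [:: (q.1, e i)])] * es i x) q.2
   (enum 'I_n) I (allq_all _ (fun _ => I)) (fun i _ => Mdual_lmul _ (es_dual i))
   (@Mdual_plus _ _ rA) (Mdual_zero rA))).
have HF2 : forall p : (M -> A) * M, Mdual rA p.1 -> Mdual rA (fun x => p.1 (lB (E p.2 q.1) x)).
  by move=> p Hp; exact: (Mdual_lB HBM _ Hp).
apply: Ttrans _ (teq_map_allq (fun p => ((fun x => p.1 (lB (E p.2 q.1) x)), q.2)) (fun p => f p q) c Hc
    (fun p Hp => teq_bal (feq (V:=A)) eq _ _ _ _ (fun (f0 : M -> A) (b : B) (m : M) => f0 (lB b m)) lB (E p.2 q.1) Hp I)).
apply: Ttrans _ (teq_splitl (fun p : (M -> A) * M => Mdual rA p.1)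
   (fun p x => p.1 (lB (E p.2 q.1) x)) q.2 c I Hc HF2 (@Mdual_plus _ _ rA) (Mdual_zero rA)).
apply: Teqv => //.
- apply: (Mdual_foldr (allq_all (P := fun _ => True) _ (fun _ => I))) => i _. exact: Mdual_lmul (es_dual i).
- exact: (Mdual_foldr Hc).
move=> x; rewrite !foldr_fadd.
rewrite (eq_bigr (fun i => \sum_(p <- c) p.1 (lB (E p.2 q.1) (e i)) * es i x)); last first.
  by move=> i _; rewrite /gam big_seq1 /Gc mulr_suml; apply: eq_bigr => p _; rewrite big_seq1.
rewrite exchange_big /=; apply: (eq_big_allq Hc) => p Hp.
transitivity (p.1 (lB (E p.2 q.1) (\sum_(i <- enum 'I_n) rA (e i) (es i x)))); last by rewrite db_sum_enum.
rewrite (lB_sumr HBM) (Mdual_sum _ _ Hp); apply: eq_bigr => i _.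
by rewrite (lB_rA HBM) (Mdual_rA _ _ Hp).
Qed.

Lemma part1_cos : comatrix_coseparable lB rA e es.
Proof.
exists gam; split; first by [].
split; first by move=> u v _ _; exact: Gc_ccinv.
split; first by move=> u v _ _; rewrite /gam big_cat.
split; first by move=> r c c' _ _ _; exact: gam_lact.
split; first by move=> r c c' _ Hc _; exact: gam_ract.
split; first by move=> c c' Hc Hc'; exact: gam_coassoc.
by move=> c Hc; exact: gam_counit.
Qed.

End Part1.

Lemma part1_main (A B : pzRingType) (M : zmodType) (lB : B -> M -> M) (rA : M -> A -> M)
  (n : nat) (e : 'I_n -> M) (es : 'I_n -> M -> A) :
  is_bimodule lB rA -> is_dual_basis rA e es ->
  separable_bimodule lB rA -> comatrix_coseparable lB rA e es.
Proof.
move=> HBM Hdb [sigma [Hwf [_ [Hlc [Hrc Hev]]]]].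
exact: (part1_cos HBM Hdb Hwf Hlc Hrc (Hev 1)).
Qed.


Section Part2.
Variables (A B : pzRingType) (M : zmodType) (lB : B -> M -> M) (rA : M -> A -> M)
  (n : nat) (e : 'I_n -> M) (es : 'I_n -> M -> A).
Hypothesis HBM : is_bimodule lB rA.
Hypothesis Hdb : is_dual_basis rA e es.
Variable gm : seq (comat A M * comat A M) -> A.
Hypothesis Hg : is_cointegral (@eq A) +%R *%R (fun _ => True) (comat_eq lB rA) cat [::]
    (@comat_lact A M) (comat_ract rA) (comat_wf rA) (comat_Delta e es) (@comat_eps A M) gm.

Lemma es_dual2 i : Mdual rA (es i). Proof. by case: Hdb. Qed.
Lemma db_sum2 m : \sum_(i <- enum 'I_n) rA (e i) (es i m) = m.
Proof. case: Hdb => _ H. by rewrite big_enum /= H. Qed.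

Local Notation CCT := (CCeq (comat_eq lB rA) cat [::] (@comat_lact A M) (comat_ract rA) (comat_wf rA)).
Local Notation CCW := (CCwf (comat_wf rA)).

Lemma g_inv u v : CCW u -> CCW v -> CCT u v -> gm u = gm v.
Proof. by case: Hg => _ [H _]; apply: H. Qed.
Lemma g_add u v : CCW u -> CCW v -> gm (u ++ v) = gm u + gm v.
Proof. by case: Hg => _ [_ [H _]]; apply: H. Qed.
Lemma g_lact r c c' : comat_wf rA c -> comat_wf rA c' -> gm [:: (comat_lact r c, c')] = r * gm [:: (c, c')].
Proof. by case: Hg => _ [_ [_ [H _]]]; apply: H. Qed.
Lemma g_ract r c c' : comat_wf rA c -> comat_wf rA c' -> gm [:: (c, comat_ract rA c' r)] = gm [:: (c, c')] * r.
Proof. by case: Hg => _ [_ [_ [_ [H _]]]]; apply: H. Qed.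
Lemma g_co c c' : comat_wf rA c -> comat_wf rA c' ->
  comat_eq lB rA (sumC cat [::] [seq comat_ract rA p.1 (gm [:: (p.2, c')]) | p <- comat_Delta e es c])
    (sumC cat [::] [seq comat_lact (gm [:: (c, p.1)]) p.2 | p <- comat_Delta e es c']).
Proof. by case: Hg => _ [_ [_ [_ [_ [H _]]]]]; apply: H. Qed.
Lemma g_cu c : comat_wf rA c -> gm (comat_Delta e es c) = comat_eps c.
Proof. by case: Hg => _ [_ [_ [_ [_ [_ H]]]]]; apply: H. Qed.

Lemma wf1 (phi : M -> A) y : Mdual rA phi -> comat_wf rA [:: (phi, y)].
Proof. by move=> H; split. Qed.
Lemma CCW1 c c' : comat_wf rA c -> comat_wf rA c' -> CCW [:: (c, c')].
Proof. by move=> H H'; split. Qed.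
Lemma CCW_cat u v : CCW u -> CCW v -> CCW (u ++ v).
Proof. by elim: u => //= p u IH [H1 H2 H3] Hv; split => //; apply: IH. Qed.

Lemma g_nil : gm [::] = 0.
Proof. apply: (addrI (gm [::])); by rewrite -g_add // addr0. Qed.

Lemma g_list u : CCW u -> gm u = \sum_(pr <- u) gm [:: pr].
Proof.
elim: u => [|pr u IH] /=; first by rewrite big_nil g_nil.
case=> H1 H2 H3. rewrite big_cons -IH //. by rewrite -g_add.
Qed.

Lemma H_eq c c' d d' : comat_wf rA c -> comat_wf rA c' -> comat_wf rA d -> comat_wf rA d' ->
  comat_eq lB rA c c' -> comat_eq lB rA d d' -> gm [:: (c, d)] = gm [:: (c', d')].
Proof.
move=> Hc Hc' Hd Hd' H1 H2; apply: g_inv; try exact: CCW1.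
exact: Teqv.
Qed.
Lemma H_left c c1 c2 d : comat_wf rA c -> comat_wf rA c1 -> comat_wf rA c2 -> comat_wf rA d ->
  comat_eq lB rA c (c1 ++ c2) -> gm [:: (c, d)] = gm [:: (c1, d)] + gm [:: (c2, d)].
Proof.
move=> Hc Hc1 Hc2 Hd H; rewrite -g_add; try exact: CCW1.
have Hc12 : comat_wf rA (c1 ++ c2).
  exact: allP_cat.
apply: g_inv; [exact: CCW1 | by apply: CCW_cat; exact: CCW1 |].
apply: (Ttrans (t := [:: (c1 ++ c2, d)])); first by apply: Teqv => //; exact: Trefl.
exact: Taddl.
Qed.
Lemma H_right c d d1 d2 : comat_wf rA c -> comat_wf rA d -> comat_wf rA d1 -> comat_wf rA d2 ->
  comat_eq lB rA d (d1 ++ d2) -> gm [:: (c, d)] = gm [:: (c, d1)] + gm [:: (c, d2)].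
Proof.
move=> Hc Hd Hd1 Hd2 H; rewrite -g_add; try exact: CCW1.
have Hd12 : comat_wf rA (d1 ++ d2).
  exact: allP_cat.
apply: g_inv; [exact: CCW1 | by apply: CCW_cat; exact: CCW1 |].
apply: (Ttrans (t := [:: (c, d1 ++ d2)])); first by apply: Teqv => //; exact: Trefl.
exact: Taddr.
Qed.
Lemma H_zl c d : comat_wf rA c -> comat_wf rA d -> comat_eq lB rA c [::] -> gm [:: (c, d)] = 0.
Proof.
move=> Hc Hd H; rewrite -g_nil; apply: g_inv; [exact: CCW1 | by [] |].
apply: (Ttrans (t := [:: ([::], d)])); first by apply: Teqv => //; exact: Trefl.
exact: teq_zerol.
Qed.
Lemma H_zr c d : comat_wf rA c -> comat_wf rA d -> comat_eq lB rA d [::] -> gm [:: (c, d)] = 0.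
Proof.
move=> Hc Hd H; rewrite -g_nil; apply: g_inv; [exact: CCW1 | by [] |].
apply: (Ttrans (t := [:: (c, [::])])); first by apply: Teqv => //; exact: Trefl.
exact: teq_zeror.
Qed.

Definition Gm (phi : M -> A) (y : M) (psi : M -> A) (z : M) : A := gm [:: ([:: (phi, y)], [:: (psi, z)])].

Section GmProps.
Variables (phi psi : M -> A).
Hypotheses (Hphi : Mdual rA phi) (Hpsi : Mdual rA psi).

Lemma Gm_D2 y z z' : Gm phi y psi (z + z') = Gm phi y psi z + Gm phi y psi z'.
Proof.
rewrite /Gm -g_add; try exact: CCW1 (wf1 _ _) (wf1 _ _).
apply: g_inv; try exact: CCW1 (wf1 _ _) (wf1 _ _).
  by split => //; split => //; split.
apply: (Ttrans (t := [:: ([:: (phi, y)], [:: (psi, z); (psi, z')])])).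
  apply: Teqv; try exact: (wf1 _ Hphi); try exact: (wf1 _ Hpsi).
  - by split => //; split.
  - exact: Trefl.
  - exact: (Taddr Hpsi I I).
exact: (Taddr (wf1 _ Hphi) (wf1 _ Hpsi) (wf1 _ Hpsi)).
Qed.
Lemma Gm_D1 y y' z : Gm phi (y + y') psi z = Gm phi y psi z + Gm phi y' psi z.
Proof.
apply: H_left; try exact: wf1.
exact: (Taddr Hphi I I).
Qed.
Lemma Gm_0_1 z : Gm phi 0 psi z = 0.
Proof. apply: H_zl; try exact: wf1. exact: teq_zeror. Qed.
Lemma Gm_0_2 y : Gm phi y psi 0 = 0.
Proof. apply: H_zr; try exact: wf1. exact: teq_zeror. Qed.
Lemma Gm_r y z a : Gm phi y psi (rA z a) = Gm phi y psi z * a.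
Proof. exact: (g_ract _ (wf1 _ Hphi) (wf1 _ Hpsi)). Qed.
Lemma Gm_l y z a : Gm (fun x => a * phi x) y psi z = a * Gm phi y psi z.
Proof. exact: (g_lact _ (wf1 _ Hphi) (wf1 _ Hpsi)). Qed.
Lemma Gm_mid y z a : Gm phi (rA y a) psi z = Gm phi y (fun x => a * psi x) z.
Proof.
apply: g_inv; try exact: CCW1 (wf1 _ _) (wf1 _ _).
  apply: CCW1; [exact: wf1 | exact: wf1 (Mdual_lmul _ Hpsi)].
exact: (teq_bal _ _ _ _ _ _ _ _ a (wf1 _ Hphi) (wf1 _ Hpsi)).
Qed.
Lemma Gm_bal1 y z b : Gm (fun x => phi (lB b x)) y psi z = Gm phi (lB b y) psi z.
Proof.
apply: H_eq; try exact: wf1; first exact: wf1 (Mdual_lB HBM _ Hphi).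
- exact: (teq_bal _ _ _ _ _ _ _ _ b Hphi I).
- exact: Trefl.
Qed.
Lemma Gm_bal2 y z b : Gm phi y (fun x => psi (lB b x)) z = Gm phi y psi (lB b z).
Proof.
apply: H_eq; try exact: wf1; first exact: wf1 (Mdual_lB HBM _ Hpsi).
- exact: Trefl.
- exact: (teq_bal _ _ _ _ _ _ _ _ b Hpsi I).
Qed.
Lemma Gm_sum2 y (I : Type) (l : seq I) (z : I -> M) :
  Gm phi y psi (\sum_(i <- l) z i) = \sum_(i <- l) Gm phi y psi (z i).
Proof. apply: add_sumf => x x'; exact: Gm_D2. Qed.
Lemma Gm_sum1 z (I : Type) (l : seq I) (y : I -> M) :
  Gm phi (\sum_(i <- l) y i) psi z = \sum_(i <- l) Gm phi (y i) psi z.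
Proof. apply: (add_sumf (f := fun y => Gm phi y psi z)) => x x'; exact: Gm_D1. Qed.
End GmProps.

Lemma Gm_feq1 phi phi' psi y z : Mdual rA phi -> Mdual rA phi' -> Mdual rA psi -> feq phi phi' ->
  Gm phi y psi z = Gm phi' y psi z.
Proof.
move=> H1 H2 H3 Hf; apply: H_eq; try exact: wf1.
- exact: Teqv.
- exact: Trefl.
Qed.
Lemma Gm_feq2 phi psi psi' y z : Mdual rA phi -> Mdual rA psi -> Mdual rA psi' -> feq psi psi' ->
  Gm phi y psi z = Gm phi y psi' z.
Proof.
move=> H1 H2 H3 Hf; apply: H_eq; try exact: wf1.
- exact: Trefl.
- exact: Teqv.
Qed.
Lemma Gm_addf1 phi phi' psi y z : Mdual rA phi -> Mdual rA phi' -> Mdual rA psi ->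
  Gm (fun x => phi x + phi' x) y psi z = Gm phi y psi z + Gm phi' y psi z.
Proof.
move=> H1 H2 H3; apply: H_left; try exact: wf1; first exact: wf1 (Mdual_plus H1 H2).
exact: (Taddl H1 H2 I).
Qed.
Lemma Gm_addf2 phi psi psi' y z : Mdual rA phi -> Mdual rA psi -> Mdual rA psi' ->
  Gm phi y (fun x => psi x + psi' x) z = Gm phi y psi z + Gm phi y psi' z.
Proof.
move=> H1 H2 H3; apply: H_right; try exact: wf1; first exact: wf1 (Mdual_plus H2 H3).
exact: (Taddl H2 H3 I).
Qed.
Lemma Gm_0f1 psi y z : Mdual rA psi -> Gm (fun _ => 0) y psi z = 0.
Proof. move=> H; apply: H_zl; try exact: wf1; first exact: wf1 (Mdual_zero rA). exact: teq_zerol. Qed.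
Lemma Gm_0f2 phi y z : Mdual rA phi -> Gm phi y (fun _ => 0) z = 0.
Proof. move=> H; apply: H_zr; try exact: wf1; first exact: wf1 (Mdual_zero rA). exact: teq_zerol. Qed.

Lemma Gm_sumf1 (I : Type) (P : I -> Prop) (l : seq I) (F : I -> M -> A) psi y z :
  allq P l -> (forall i, P i -> Mdual rA (F i)) -> Mdual rA psi ->
  Gm (fun x => \sum_(i <- l) F i x) y psi z = \sum_(i <- l) Gm (F i) y psi z.
Proof.
move=> + HF Hpsi; elim: l => [|i l IH] /=.
  move=> _; rewrite big_nil; transitivity (Gm (fun _ => 0) y psi z); last exact: Gm_0f1.
  apply: Gm_feq1 => //.
  - exact: (Mdual_bigsum (l := [::]) Logic.I HF).
  - exact: Mdual_zero.
  - by move=> x; rewrite big_nil.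
case=> Hi Hl; rewrite big_cons -IH //.
rewrite -Gm_addf1 //; last exact: (Mdual_bigsum Hl HF).
  apply: Gm_feq1 => //.
  - exact: (Mdual_bigsum (l := i :: l) (conj Hi Hl) HF).
  - apply: Mdual_plus; [exact: HF | exact: (Mdual_bigsum Hl HF)].
  - by move=> x; rewrite big_cons.
exact: HF.
Qed.
Lemma Gm_sumf2 (I : Type) (P : I -> Prop) (l : seq I) (F : I -> M -> A) phi y z :
  allq P l -> (forall i, P i -> Mdual rA (F i)) -> Mdual rA phi ->
  Gm phi y (fun x => \sum_(i <- l) F i x) z = \sum_(i <- l) Gm phi y (F i) z.
Proof.
move=> + HF Hphi; elim: l => [|i l IH] /=.
  move=> _; rewrite big_nil; transitivity (Gm phi y (fun _ => 0) z); last exact: Gm_0f2.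
  apply: Gm_feq2 => //.
  - exact: (Mdual_bigsum (l := [::]) Logic.I HF).
  - exact: Mdual_zero.
  - by move=> x; rewrite big_nil.
case=> Hi Hl; rewrite big_cons -IH //.
rewrite -Gm_addf2 //; last exact: (Mdual_bigsum Hl HF).
  apply: Gm_feq2 => //.
  - exact: (Mdual_bigsum (l := i :: l) (conj Hi Hl) HF).
  - apply: Mdual_plus; [exact: HF | exact: (Mdual_bigsum Hl HF)].
  - by move=> x; rewrite big_cons.
exact: HF.
Qed.

Lemma es_lB i b m : es i (lB b m) = \sum_(k <- enum 'I_n) es i (lB b (e k)) * es k m.
Proof.
rewrite -{1}(db_sum2 m) (lB_sumr HBM) (Mdual_sum _ _ (es_dual2 i)); apply: eq_bigr => k _.
by rewrite (lB_rA HBM) (Mdual_rA _ _ (es_dual2 i)).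
Qed.

Lemma allq_enum (P : 'I_n -> Prop) : (forall i, P i) -> allq P (enum 'I_n).
Proof. by move=> H; apply: allq_all. Qed.

Lemma Gm_lBy i y psi z b : Mdual rA psi ->
  Gm (es i) (lB b y) psi z = \sum_(k <- enum 'I_n) es i (lB b (e k)) * Gm (es k) y psi z.
Proof.
move=> Hpsi; rewrite -Gm_bal1 //; last exact: es_dual2.
rewrite (Gm_feq1 (phi' := fun m => \sum_(k <- enum 'I_n) es i (lB b (e k)) * es k m)) //.
- rewrite (Gm_sumf1 (P := fun _ => True)) //; first (apply: eq_bigr => k _; apply: Gm_l => //; exact: es_dual2).
  + exact: allq_enum.
  + move=> k _; apply: Mdual_lmul; exact: es_dual2.
- exact: (Mdual_lB HBM _ (es_dual2 i)).
- apply: (Mdual_bigsum (P := fun _ => True)); first exact: allq_enum.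
  move=> k _; apply: Mdual_lmul; exact: es_dual2.
- move=> m; exact: es_lB.
Qed.

Lemma Gm_lBz i y l x b :
  Gm (es i) y (es l) (lB b x) = \sum_(k <- enum 'I_n) Gm (es i) (rA y (es l (lB b (e k)))) (es k) x.
Proof.
rewrite -Gm_bal2; try exact: es_dual2.
rewrite (Gm_feq2 (psi' := fun m => \sum_(k <- enum 'I_n) es l (lB b (e k)) * es k m)); try exact: es_dual2.
- rewrite (Gm_sumf2 (P := fun _ => True)); try exact: es_dual2.
  + apply: eq_bigr => k _; rewrite Gm_mid //; exact: es_dual2.
  + exact: allq_enum.
  + move=> k _; apply: Mdual_lmul; exact: es_dual2.
- exact: (Mdual_lB HBM _ (es_dual2 l)).
- apply: (Mdual_bigsum (P := fun _ => True)); first exact: allq_enum.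
  move=> k _; apply: Mdual_lmul; exact: es_dual2.
- move=> m; exact: es_lB.
Qed.

Definition W (y : M) (psi : M -> A) (z : M) : M := \sum_(i <- enum 'I_n) rA (e i) (Gm (es i) y psi z).
Definition Th (u : M -> M) (x : M) : M := \sum_(l <- enum 'I_n) W (u (e l)) (es l) x.

Lemma W_Mend y psi : Mdual rA psi -> Mend rA (W y psi).
Proof.
move=> Hpsi; split=> [x x'|x a]; rewrite /W.
  rewrite -big_split; apply: eq_bigr => i _ /=. rewrite Gm_D2 //; last exact: es_dual2.
  by rewrite (rA_Dr HBM).
rewrite (rA_suml HBM); apply: eq_bigr => i _. rewrite Gm_r //; last exact: es_dual2.
by rewrite (rA_mul HBM).
Qed.

Lemma Th_Mend u : Mend rA (Th u).
Proof.
apply: (@Mend_bigsum _ _ _ _ _ HBM _ (fun _ => True)); first exact: allq_enum.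
move=> l _; apply: W_Mend; exact: es_dual2.
Qed.

Lemma Th_feq u u' : (forall m, u m = u' m) -> forall x, Th u x = Th u' x.
Proof. by move=> H x; rewrite /Th; apply: eq_bigr => l _; rewrite H. Qed.

Lemma W_D1 y y' psi z : Mdual rA psi -> W (y + y') psi z = W y psi z + W y' psi z.
Proof.
move=> Hpsi; rewrite /W -big_split; apply: eq_bigr => i _ /=.
rewrite Gm_D1 //; last exact: es_dual2. by rewrite (rA_Dr HBM).
Qed.
Lemma W_0 psi z : Mdual rA psi -> W 0 psi z = 0.
Proof.
move=> Hpsi; rewrite /W big1 // => i _. rewrite Gm_0_1 //; last exact: es_dual2.
exact: (rA_0r HBM).
Qed.

Lemma Th_D u v x : Th (fun m => u m + v m) x = Th u x + Th v x.
Proof. rewrite /Th -big_split; apply: eq_bigr => l _ /=; apply: W_D1; exact: es_dual2. Qed.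
Lemma Th_0 x : Th (fun _ => 0) x = 0.
Proof. rewrite /Th big1 // => l _; apply: W_0; exact: es_dual2. Qed.

Lemma W_lB y psi z b : Mdual rA psi -> W (lB b y) psi z = lB b (W y psi z).
Proof.
move=> Hpsi; rewrite /W (lB_sumr HBM).
rewrite (eq_bigr (fun i => \sum_(k <- enum 'I_n) rA (rA (e i) (es i (lB b (e k)))) (Gm (es k) y psi z))); last first.
  move=> i _; rewrite Gm_lBy // (rA_sumr HBM); apply: eq_bigr => k _; by rewrite (rA_mul HBM).
rewrite exchange_big /=; apply: eq_bigr => k _.
by rewrite -(rA_suml HBM) db_sum2 (lB_rA HBM).
Qed.

Lemma Th_lB u b x : Th (fun m => lB b (u m)) x = lB b (Th u x).
Proof. rewrite /Th (lB_sumr HBM); apply: eq_bigr => l _; apply: W_lB; exact: es_dual2. Qed.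

Lemma Th_rlB u b x : Mend rA u -> Th (fun m => u (lB b m)) x = Th u (lB b x).
Proof.
move=> Hu; symmetry; rewrite /Th /W.
rewrite (eq_bigr (fun l => \sum_(i <- enum 'I_n) \sum_(k <- enum 'I_n)
   rA (e i) (Gm (es i) (rA (u (e l)) (es l (lB b (e k)))) (es k) x))); last first.
  move=> l _; apply: eq_bigr => i _; by rewrite Gm_lBz (rA_sumr HBM).
rewrite exchange_big /= [RHS]exchange_big /=; apply: eq_bigr => i _.
rewrite exchange_big /=; apply: eq_bigr => k _.
rewrite -(rA_sumr HBM) -Gm_sum1; try exact: es_dual2.
congr (rA (e i) (Gm (es i) _ (es k) x)).
rewrite -{2}(db_sum2 (lB b (e k))) (Mend_sum _ _ Hu); apply: eq_bigr => l _.
by rewrite (Mend_rA _ _ Hu).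
Qed.

Lemma CCW_Delta i x : CCW (comat_Delta e es [:: (es i, x)]).
Proof.
rewrite /comat_Delta /= cats0. elim: (enum 'I_n) => //= l L IH; split; [exact: wf1 (es_dual2 _) | exact: wf1 (es_dual2 _) | exact: IH].
Qed.

Lemma Gm_counit i x : \sum_(l <- enum 'I_n) Gm (es i) (e l) (es l) x = es i x.
Proof.
transitivity (comat_eps [:: (es i, x)]); last by rewrite /comat_eps big_seq1.
rewrite -(g_cu (wf1 x (es_dual2 i))).
rewrite (g_list (CCW_Delta i x)) /comat_Delta [in RHS]big_flatten [in RHS]big_map [in RHS]big_seq1 [in RHS]big_map. by [].
Qed.

Lemma Th_id x : Th (fun m => m) x = x.
Proof.
rewrite /Th /W exchange_big /= -[RHS]db_sum2; apply: eq_bigr => i _.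
by rewrite -(rA_sumr HBM) Gm_counit.
Qed.

Local Notation SWE := (swe_eq lB rA).
Local Notation sract := (fun (s : M -> M) (b : B) (m : M) => s (lB b m)).
Local Notation slact := (fun (b : B) (s : M -> M) (m : M) => lB b (s m)).

Lemma comat_swe_hom (S : A -> M) (rho : M -> A) :
  additive_fun S -> (forall a a', S (a * a') = rA (S a) a') -> Mdual rA rho ->
  forall c c', comat_eq lB rA c c' ->
  SWE (map (fun p => (fun x => S (p.1 x), fun x => rA p.2 (rho x))) c)
      (map (fun p => (fun x => S (p.1 x), fun x => rA p.2 (rho x))) c').
Proof.
move=> HS HS' Hr c c' H.
have MS : forall phi, Mdual rA phi -> Mend rA (fun x => S (phi x)).
  by move=> phi Hphi; apply: Mend_Sf.
have MR : forall m, Mend rA (fun x => rA m (rho x)) by move=> m; exact: (Mend_rAf HBM).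
apply: (teq_hom _ _ _ _ _ _ _ H).
- move=> x x' y y' Hx Hx' _ _ Hxx' <- /=.
  apply: Teqv; [exact: MS Hx | exact: MS Hx' | exact: MR | exact: MR | by move=> m /=; rewrite Hxx' | by []].
- move=> x x' y Hx Hx' _ /=.
  apply: (Ttrans (t := [:: (Sadd (fun m => S (x m)) (fun m => S (x' m)), fun m => rA y (rho m))])).
    apply: Teqv; [exact: (MS _ (Mdual_plus Hx Hx')) | exact: (Mend_add HBM (MS _ Hx) (MS _ Hx'))
                 | exact: MR | exact: MR | by move=> m /=; rewrite /Sadd HS | by []].
  exact: (Taddl (MS _ Hx) (MS _ Hx') (MR y)).
- move=> x y y' Hx _ _ /=.
  apply: (Ttrans (t := [:: (fun m => S (x m), Sadd (fun m => rA y (rho m)) (fun m => rA y' (rho m)))])).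
    apply: Teqv; [exact: MS Hx | exact: MS Hx | exact: MR | exact: (Mend_add HBM (MR y) (MR y'))
                 | by [] | by move=> m /=; rewrite /Sadd (rA_Dl HBM)].
  exact: (Taddr (MS _ Hx) (MR y) (MR y')).
- move=> y _ /=.
  apply: (Ttrans (t := [:: (@Szero M, fun m => rA y (rho m))])); last exact: (teq_zerol _ _ _ _ _ _ _ _ _ (MR y)).
  apply: Teqv; [exact: (MS _ (Mdual_zero rA)) | exact: (Mend_zero HBM) | exact: MR | exact: MR
               | by move=> m /=; rewrite /Szero add0f | by []].
- move=> x Hx /=.
  apply: (Ttrans (t := [:: (fun m => S (x m), @Szero M)])); last exact: (teq_zeror _ _ _ _ _ _ _ _ _ (MS _ Hx)).
  apply: Teqv; [exact: MS Hx | exact: MS Hx | exact: MR | exact: (Mend_zero HBM)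
               | by [] | by move=> m /=; rewrite /Szero (rA_0l HBM)].
- move=> x b y Hx _ /=.
  apply: Ttrans (teq_bal (feq (U:=M) (V:=M)) (feq (U:=M) (V:=M)) (@Sadd M) (@Sadd M) (@Szero M) (@Szero M)
        sract slact b (MS _ Hx) (MR y)) _.
  have Hm : Mend rA (fun m => lB b (rA y (rho m))).
    split=> [m m'|m a] /=; first by rewrite (Mdual_D _ _ Hr) (rA_Dr HBM) (lB_Dr HBM).
    by rewrite (Mdual_rA _ _ Hr) (rA_mul HBM) (lB_rA HBM).
  apply: Teqv; [exact: MS Hx | exact: MS Hx | exact: Hm | exact: MR | by [] | by move=> m /=; rewrite (lB_rA HBM)].
Qed.

Lemma Gm_Mdual i y psi : Mdual rA psi -> Mdual rA (Gm (es i) y psi).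
Proof.
move=> Hpsi; split=> [z z'|z a]; first exact: (Gm_D2 (es_dual2 i) Hpsi).
exact: (Gm_r (es_dual2 i) Hpsi).
Qed.

Lemma Delta1 (phi : M -> A) y :
  comat_Delta e es [:: (phi, y)] = [seq ([:: (phi, e k)], [:: (es k, y)]) | k <- enum 'I_n].
Proof. by rewrite /comat_Delta /= cats0. Qed.

Lemma Kp (s : M -> M) y psi z (r : 'I_n) : Mend rA s -> Mdual rA psi ->
  SWE [:: (s, fun x => rA (W y psi z) (es r x))] [:: (fun x => s (W y psi x), fun x => rA z (es r x))].
Proof.
move=> Hs Hpsi.
have HSa : forall i, additive_fun (fun a => s (rA (e i) a)).
  by move=> i a a'; rewrite /= (rA_Dr HBM) (Mend_D _ _ Hs).
have HSm : forall i a a', s (rA (e i) (a * a')) = rA (s (rA (e i) a)) a'.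
  by move=> i a a'; rewrite (rA_mul HBM) (Mend_rA _ _ Hs).
have MR : forall m j, Mend rA (fun x => rA m (es j x)).
  by move=> m j; exact: (Mend_rAf HBM _ (es_dual2 j)).
have MSi : forall i (phi : M -> A), Mdual rA phi -> Mend rA (fun x => s (rA (e i) (phi x))).
  by move=> i phi Hphi; exact: (Mend_Sf (HSa i) (HSm i) Hphi).
have Hall : forall P : 'I_n -> Prop, (forall i, P i) -> allq P (enum 'I_n) by move=> P; exact: allq_enum.
pose G k := Gm (es k) y psi z.
pose Tk k := fun x => rA (rA (e k) (G k)) (es r x).
pose Si i := fun x => s (rA (e i) (es i x)).
pose R := fun x => rA z (es r x).
pose U i := fun x => s (rA (e i) (Gm (es i) y psi x)).
apply: (Ttrans (t := [seq (s, Tk k) | k <- enum 'I_n])).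
  apply: (Ttrans (t := [:: (s, foldr (@Sadd M) (@Szero M) [seq Tk k | k <- enum 'I_n])])).
    apply: Teqv; [exact: Hs | exact: Hs | exact: MR
                 | exact: (Mend_foldr HBM (Hall (fun _ => True) (fun _ => I)) (fun k _ => MR _ r)) | by [] | ].
    by move=> x; rewrite foldr_Sadd /W (rA_suml HBM).
  exact: (teq_splitr (fun _ => True) Tk s (enum 'I_n) Hs (Hall (fun _ => True) (fun _ => I))
           (fun k _ => MR _ r) (@Mend_add _ _ _ _ _ HBM) (Mend_zero HBM)).
apply: (Ttrans (t := flatten [seq [seq (Si i, Tk k) | i <- enum 'I_n] | k <- enum 'I_n])).
  rewrite -(flatten_map1 (fun k => (s, Tk k))).
  apply: (teq_flatten_allq _ _ _ (Hall (fun _ => True) (fun _ => I))) => k _.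
  apply: (Ttrans (t := [:: (foldr (@Sadd M) (@Szero M) [seq Si i | i <- enum 'I_n], Tk k)])).
    apply: Teqv; [exact: Hs
                 | exact: (Mend_foldr HBM (Hall (fun _ => True) (fun _ => I)) (fun i _ => MSi i _ (es_dual2 i)))
                 | exact: MR | exact: MR | | by []].
    by move=> x; rewrite foldr_Sadd -(Mend_sum _ _ Hs) db_sum2.
  exact: (teq_splitl (fun _ => True) Si (Tk k) (enum 'I_n) (MR _ r) (Hall (fun _ => True) (fun _ => I))
           (fun i _ => MSi i _ (es_dual2 i)) (@Mend_add _ _ _ _ _ HBM) (Mend_zero HBM)).
apply: Ttrans (teq_exch (fun k i => (Si i, Tk k)) (enum 'I_n) (enum 'I_n)) _.
apply: (Ttrans (t := [seq (U i, R) | i <- enum 'I_n])).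
  rewrite -(flatten_map1 (fun i => (U i, R))).
  apply: (teq_flatten_allq _ _ _ (Hall (fun _ => True) (fun _ => I))) => i _.
  pose Psi := fun p : (M -> A) * M => (fun x => s (rA (e i) (p.1 x)), fun x => rA p.2 (es r x)).
  have E1 : [seq (Si i, Tk k) | k <- enum 'I_n] = map Psi [seq (es i, rA (e k) (G k)) | k <- enum 'I_n].
    by rewrite -map_comp.
  rewrite E1.
  have Hco : comat_eq lB rA [seq (es i, rA (e k) (G k)) | k <- enum 'I_n]
                 [seq (fun m => Gm (es i) y psi (e k) * es k m, z) | k <- enum 'I_n].
    have := g_co (wf1 y (es_dual2 i)) (wf1 z Hpsi).
    rewrite !sumC_cat !Delta1.
    rewrite (flatten_map_single (k := fun k => (es i, rA (e k) (G k)))) //.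
    by rewrite (flatten_map_single (k := fun k => (fun m => Gm (es i) y psi (e k) * es k m, z))).
  apply: Ttrans (comat_swe_hom (HSa i) (HSm i) (es_dual2 r) Hco) _.
  rewrite -map_comp.
  apply: (Ttrans (t := [:: (foldr (@Sadd M) (@Szero M)
       [seq (fun x => s (rA (e i) (Gm (es i) y psi (e k) * es k x))) | k <- enum 'I_n], R)])).
    apply: Tsym.
    exact: (teq_splitl (fun _ => True) (fun k x => s (rA (e i) (Gm (es i) y psi (e k) * es k x))) R
             (enum 'I_n) (MR z r) (Hall (fun _ => True) (fun _ => I))
             (fun k _ => MSi i _ (Mdual_lmul _ (es_dual2 k))) (@Mend_add _ _ _ _ _ HBM) (Mend_zero HBM)).
  apply: Teqv; [ exact: (Mend_foldr HBM (Hall (fun _ => True) (fun _ => I))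
                            (fun k _ => MSi i _ (Mdual_lmul _ (es_dual2 k))))
               | exact: (MSi i _ (Gm_Mdual i y Hpsi)) | exact: MR | exact: MR | | by []].
  move=> x; rewrite foldr_Sadd -(Mend_sum _ _ Hs) -(rA_sumr HBM).
  congr (s (rA (e i) _)).
  rewrite -{2}(db_sum2 x) (Gm_sum2 (es_dual2 i) Hpsi); apply: eq_bigr => k _.
  by rewrite (Gm_r (es_dual2 i) Hpsi).
apply: (Ttrans (t := [:: (foldr (@Sadd M) (@Szero M) [seq U i | i <- enum 'I_n], R)])).
  apply: Tsym.
  exact: (teq_splitl (fun _ => True) U R (enum 'I_n) (MR z r) (Hall (fun _ => True) (fun _ => I))
           (fun i _ => MSi i _ (Gm_Mdual i y Hpsi)) (@Mend_add _ _ _ _ _ HBM) (Mend_zero HBM)).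
apply: Teqv; [ exact: (Mend_foldr HBM (Hall (fun _ => True) (fun _ => I)) (fun i _ => MSi i _ (Gm_Mdual i y Hpsi)))
             | exact: (Mend_comp Hs (W_Mend y Hpsi)) | exact: MR | exact: MR | | by []].
by move=> x; rewrite foldr_Sadd /W (Mend_sum _ _ Hs).
Qed.

Lemma Kl (s t' : M -> M) y psi : Mend rA s -> Mend rA t' -> Mdual rA psi ->
  SWE [:: (s, fun x => W y psi (t' x))] [:: (fun x => s (W y psi x), t')].
Proof.
move=> Hs Ht Hpsi.
have MR : forall m j, Mend rA (fun x => rA m (es j x)).
  by move=> m j; exact: (Mend_rAf HBM _ (es_dual2 j)).
have Hall : forall P : 'I_n -> Prop, (forall i, P i) -> allq P (enum 'I_n) by move=> P; exact: allq_enum.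
have HW := W_Mend y Hpsi.
apply: (Ttrans (t := [seq (s, fun x => rA (W y psi (t' (e r))) (es r x)) | r <- enum 'I_n])).
  apply: (Ttrans (t := [:: (s, foldr (@Sadd M) (@Szero M)
           [seq (fun x => rA (W y psi (t' (e r))) (es r x)) | r <- enum 'I_n])])).
    apply: Teqv; [exact: Hs | exact: Hs | exact: (Mend_comp HW Ht)
                 | exact: (Mend_foldr HBM (Hall (fun _ => True) (fun _ => I)) (fun r _ => MR _ r)) | by [] |].
    move=> x; rewrite foldr_Sadd -{1}(db_sum2 x) (Mend_sum _ _ Ht) (Mend_sum _ _ HW); apply: eq_bigr => r _.
    by rewrite (Mend_rA _ _ Ht) (Mend_rA _ _ HW).
  exact: (teq_splitr (fun _ => True) (fun r x => rA (W y psi (t' (e r))) (es r x)) s (enum 'I_n) Hs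
           (Hall (fun _ => True) (fun _ => I)) (fun r _ => MR _ r) (@Mend_add _ _ _ _ _ HBM) (Mend_zero HBM)).
apply: (Ttrans (t := [seq (fun x => s (W y psi x), fun x => rA (t' (e r)) (es r x)) | r <- enum 'I_n])).
  apply: (teq_map_allq _ _ _ (Hall (fun _ => True) (fun _ => I))) => r _. exact: Kp.
apply: Tsym.
apply: (Ttrans (t := [:: (fun x => s (W y psi x), foldr (@Sadd M) (@Szero M)
           [seq (fun x => rA (t' (e r)) (es r x)) | r <- enum 'I_n])])).
  apply: Teqv; [exact: (Mend_comp Hs HW) | exact: (Mend_comp Hs HW) | exact: Ht
               | exact: (Mend_foldr HBM (Hall (fun _ => True) (fun _ => I)) (fun r _ => MR _ r)) | by [] |].
  move=> x; rewrite foldr_Sadd -{1}(db_sum2 x) (Mend_sum _ _ Ht); apply: eq_bigr => r _.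
  by rewrite (Mend_rA _ _ Ht).
exact: (teq_splitr (fun _ => True) (fun r x => rA (t' (e r)) (es r x)) (fun x => s (W y psi x)) (enum 'I_n)
         (Mend_comp Hs HW) (Hall (fun _ => True) (fun _ => I)) (fun r _ => MR _ r)
         (@Mend_add _ _ _ _ _ HBM) (Mend_zero HBM)).
Qed.

Lemma ThK (s t' u : M -> M) : Mend rA s -> Mend rA t' ->
  SWE [:: (s, fun x => Th u (t' x))] [:: (fun x => s (Th u x), t')].
Proof.
move=> Hs Ht.
have Hall : forall P : 'I_n -> Prop, (forall i, P i) -> allq P (enum 'I_n) by move=> P; exact: allq_enum.
have HW : forall l, Mend rA (W (u (e l)) (es l)) by move=> l; apply: W_Mend; exact: es_dual2.
apply: (Ttrans (t := [seq (s, fun x => W (u (e l)) (es l) (t' x)) | l <- enum 'I_n])).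
  apply: (Ttrans (t := [:: (s, foldr (@Sadd M) (@Szero M)
           [seq (fun x => W (u (e l)) (es l) (t' x)) | l <- enum 'I_n])])).
    apply: Teqv; [exact: Hs | exact: Hs | exact: (Mend_comp (Th_Mend u) Ht)
                 | exact: (Mend_foldr HBM (Hall (fun _ => True) (fun _ => I)) (fun l _ => Mend_comp (HW l) Ht))
                 | by [] |].
    by move=> x; rewrite foldr_Sadd.
  exact: (teq_splitr (fun _ => True) (fun l x => W (u (e l)) (es l) (t' x)) s (enum 'I_n) Hs
           (Hall (fun _ => True) (fun _ => I)) (fun l _ => Mend_comp (HW l) Ht)
           (@Mend_add _ _ _ _ _ HBM) (Mend_zero HBM)).
apply: (Ttrans (t := [seq (fun x => s (W (u (e l)) (es l) x), t') | l <- enum 'I_n])).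
  apply: (teq_map_allq _ _ _ (Hall (fun _ => True) (fun _ => I))) => l _.
  apply: Kl => //; exact: es_dual2.
apply: Tsym.
apply: (Ttrans (t := [:: (foldr (@Sadd M) (@Szero M) [seq (fun x => s (W (u (e l)) (es l) x)) | l <- enum 'I_n], t')])).
  apply: Teqv; [exact: (Mend_comp Hs (Th_Mend u))
               | exact: (Mend_foldr HBM (Hall (fun _ => True) (fun _ => I)) (fun l _ => Mend_comp Hs (HW l)))
               | exact: Ht | exact: Ht | | by []].
  by move=> x; rewrite foldr_Sadd /Th (Mend_sum _ _ Hs).
exact: (teq_splitl (fun _ => True) (fun l x => s (W (u (e l)) (es l) x)) t' (enum 'I_n) Ht
         (Hall (fun _ => True) (fun _ => I)) (fun l _ => Mend_comp Hs (HW l))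
         (@Mend_add _ _ _ _ _ HBM) (Mend_zero HBM)).
Qed.

Definition Gs (d d' : swe M) (x : M) : M :=
  \sum_(p <- d) \sum_(q <- d') p.1 (Th (fun m => p.2 (q.1 m)) (q.2 x)).
Definition gs (w : seq (swe M * swe M)) : M -> M := fun x => \sum_(pr <- w) Gs pr.1 pr.2 x.

Lemma swe_wf_allq d : swe_wf rA d -> allq (fun p : (M -> M) * (M -> M) => Mend rA p.1 /\ Mend rA p.2) d.
Proof. by move=> /allq_allP. Qed.

Lemma Gs_left d1 d2 d' x : SWE d1 d2 -> Gs d1 d' x = Gs d2 d' x.
Proof.
move=> H; rewrite /Gs.
apply: (teq_inv (fun s s' => \sum_(q <- d') s (Th (fun m => s' (q.1 m)) (q.2 x)))) _ _ _ _ _ _ H.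
- move=> s1 s2 t1 t2 _ _ _ _ Hs Ht; apply: eq_bigr => q _.
  by rewrite Hs (Th_feq (u' := fun m => t2 (q.1 m))).
- by move=> s1 s2 t _ _ _; rewrite -big_split.
- move=> s1 t1 t2 Hs _ _; rewrite -big_split; apply: eq_bigr => q _ /=.
  by rewrite /Sadd (Th_D (fun m => t1 (q.1 m)) (fun m => t2 (q.1 m))) (Mend_D _ _ Hs).
- by move=> t _; rewrite big1.
- move=> s1 Hs; rewrite big1 // => q _.
  by rewrite (Th_feq (u' := fun _ => 0)) // Th_0 (Mend_0 Hs).
- move=> s1 b t _ _; apply: eq_bigr => q _ /=.
  by rewrite (Th_lB (fun m => t (q.1 m))).
Qed.

Lemma Gs_right d d1 d2 x : swe_wf rA d -> SWE d1 d2 -> Gs d d1 x = Gs d d2 x.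
Proof.
move=> /swe_wf_allq Hd H; rewrite /Gs (exchange_big _ d d1) (exchange_big _ d d2).
apply: (teq_inv (fun t t' => \sum_(p <- d) p.1 (Th (fun m => p.2 (t m)) (t' x)))) _ _ _ _ _ _ H.
- move=> s1 s2 t1 t2 _ _ _ _ Hs Ht; apply: eq_bigr => p _.
  by rewrite Ht (Th_feq (u' := fun m => p.2 (s2 m))) // => m; rewrite Hs.
- move=> s1 s2 t Hs1 Hs2 _; rewrite -big_split; apply: (eq_big_allq Hd) => p [Hp1 Hp2] /=.
  rewrite (Th_feq (u' := fun m => p.2 (s1 m) + p.2 (s2 m))); last by move=> m; rewrite /Sadd (Mend_D _ _ Hp2).
  by rewrite (Th_D (fun m => p.2 (s1 m)) (fun m => p.2 (s2 m))) (Mend_D _ _ Hp1).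
- move=> s1 t1 t2 _ _ _; rewrite -big_split; apply: (eq_big_allq Hd) => p [Hp1 Hp2] /=.
  by rewrite /Sadd (Mend_D _ _ (Th_Mend _)) (Mend_D _ _ Hp1).
- move=> t _; rewrite (eq_big_allq Hd (G := fun _ => 0)) ?big1_eq // => p [Hp1 Hp2].
  rewrite (Th_feq (u' := fun _ => 0)); last by move=> m; rewrite /Szero (Mend_0 Hp2).
  by rewrite Th_0 (Mend_0 Hp1).
- move=> s1 _; rewrite (eq_big_allq Hd (G := fun _ => 0)) ?big1_eq // => p [Hp1 Hp2].
  by rewrite /Szero (Mend_0 (Th_Mend _)) (Mend_0 Hp1).
- move=> s1 b t Hs _; apply: (eq_big_allq Hd) => p [Hp1 Hp2] /=.
  by rewrite (Th_rlB (u := fun m => p.2 (s1 m))) //; exact: Mend_comp.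
Qed.

Local Notation SCC := (CCeq (swe_eq lB rA) cat [::] (@swe_lact M) (@swe_ract M) (swe_wf rA)).

Lemma gs_inv u v x : SCC u v -> gs u x = gs v x.
Proof.
move=> H; rewrite /gs.
apply: (teq_inv (fun d d' => Gs d d' x)) _ _ _ _ _ _ H.
- move=> x1 x2 y1 y2 _ Px2 _ _ Hx Hy. by rewrite (Gs_left _ _ Hx) (Gs_right _ Px2 Hy).
- by move=> x1 x2 y _ _ _; rewrite /Gs big_cat.
- by move=> x1 y1 y2 _ _ _; rewrite /Gs -big_split; apply: eq_bigr => p _; rewrite big_cat.
- by move=> y _; rewrite /Gs big_nil.
- by move=> x1 _; rewrite /Gs big1 // => p _; rewrite big_nil.
- move=> x1 r y _ _; rewrite /Gs big_map; apply: eq_bigr => p _.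
  by rewrite big_map.
Qed.

Lemma Gs_Mend d d' : swe_wf rA d -> swe_wf rA d' -> Mend rA (Gs d d').
Proof.
move=> /swe_wf_allq Hd /swe_wf_allq Hd'.
apply: (Mend_bigsum HBM Hd) => p [Hp1 Hp2].
apply: (Mend_bigsum HBM Hd') => q [Hq1 Hq2].
apply: Mend_comp Hp1 _; exact: (Mend_comp (Th_Mend _) Hq2).
Qed.

Lemma gs_Mend u : CCwf (swe_wf rA) u -> Mend rA (gs u).
Proof.
move=> /allq_allP Hu; apply: (Mend_bigsum HBM Hu) => pr [H1 H2]; exact: Gs_Mend.
Qed.

Lemma gs_coassoc c c' : swe_wf rA c -> swe_wf rA c' ->
  SWE (sumC cat [::] [seq swe_ract p.1 (gs [:: (p.2, c')]) | p <- swe_Delta c])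
      (sumC cat [::] [seq swe_lact (gs [:: (c, p.1)]) p.2 | p <- swe_Delta c']).
Proof.
move=> Hcw Hcw'; have Hc := swe_wf_allq Hcw; have Hc' := swe_wf_allq Hcw'.
pose f := fun (p q : (M -> M) * (M -> M)) => (fun x => p.1 (Th (fun m => p.2 (q.1 m)) x), q.2).
pose kL := fun p : (M -> M) * (M -> M) => (p.1, Smul (fun m => m) (gs [:: ([:: (fun m => m, p.2)], c')])).
pose kR := fun q : (M -> M) * (M -> M) => (Smul (gs [:: (c, [:: (q.1, fun m => m)])]) (fun m => m), q.2).
rewrite !sumC_cat /swe_Delta (flatten_map_single (k := kL)) // (flatten_map_single (k := kR)) //.
apply: (Ttrans (t := flatten [seq [seq f p q | q <- c'] | p <- c])).
  rewrite -(flatten_map1 kL).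
  apply: (teq_flatten_allq _ _ _ Hc) => p [Hp1 Hp2].
  apply: (Ttrans (t := [:: (p.1, foldr (@Sadd M) (@Szero M)
              [seq (fun x => Th (fun m => p.2 (q.1 m)) (q.2 x)) | q <- c'])])).
    apply: Teqv; [exact: Hp1 | exact: Hp1 | | | by [] |].
    + apply: (Mend_comp (Mend_id rA)); apply: gs_Mend; split => //; split => //.
    + apply: (Mend_foldr HBM Hc') => q [Hq1 Hq2]; exact: (Mend_comp (Th_Mend _) Hq2).
    + by move=> x; rewrite foldr_Sadd /Smul /gs big_seq1 /Gs big_seq1.
  apply: Ttrans (teq_splitr _ (fun q x => Th (fun m => p.2 (q.1 m)) (q.2 x)) p.1 c' Hp1 Hc'
      (fun q Hq => Mend_comp (Th_Mend _) (proj2 Hq)) (@Mend_add _ _ _ _ _ HBM) (Mend_zero HBM)) _.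
  apply: (teq_map_allq _ (f p) c' Hc') => q [Hq1 Hq2].
  exact: ThK.
apply: Ttrans (teq_exch f c c') _. apply: Tsym.
rewrite -(flatten_map1 kR).
apply: (teq_flatten_allq _ _ _ Hc') => q [Hq1 Hq2].
apply: (Ttrans (t := [:: (foldr (@Sadd M) (@Szero M)
            [seq (fun x => p.1 (Th (fun m => p.2 (q.1 m)) x)) | p <- c], q.2)])).
  apply: Teqv; [ | | exact: Hq2 | exact: Hq2 | | by []].
  + apply: Mend_comp (Mend_id rA); apply: gs_Mend; split => //; split => //.
  + apply: (Mend_foldr HBM Hc) => p [Hp1 Hp2]; exact: (Mend_comp Hp1 (Th_Mend _)).
  + move=> x; rewrite foldr_Sadd /Smul /gs big_seq1 /Gs; apply: eq_bigr => p _.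
    by rewrite big_seq1.
exact: (teq_splitl _ (fun p x => p.1 (Th (fun m => p.2 (q.1 m)) x)) q.2 c Hq2 Hc
      (fun p Hp => Mend_comp (proj1 Hp) (Th_Mend _)) (@Mend_add _ _ _ _ _ HBM) (Mend_zero HBM)).
Qed.

Lemma part2_cos : sweedler_coseparable lB rA.
Proof.
exists gs; split; first by move=> u Hu; exact: gs_Mend.
split; first by move=> u v _ _ H x; exact: gs_inv.
split; first by move=> u v _ _ x; rewrite /gs big_cat.
split.
  move=> r c c' Hr _ _ x; rewrite /Smul /gs /= !big_seq1 /Gs big_map (Mend_sum _ _ Hr).
  by apply: eq_bigr => p _; rewrite (Mend_sum _ _ Hr).
split.
  move=> r c c' _ _ _ x; rewrite /Smul /gs /= !big_seq1 /Gs; apply: eq_bigr => p _.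
  by rewrite big_map.
split; first by move=> c c' Hc Hc'; exact: gs_coassoc.
move=> c Hc x; rewrite /gs big_map /swe_eps foldr_Sadd; apply: eq_bigr => p _.
by rewrite /Gs !big_seq1 /= Th_id.
Qed.

End Part2.

Lemma part2_main (A B : pzRingType) (M : zmodType) (lB : B -> M -> M) (rA : M -> A -> M)
  (n : nat) (e : 'I_n -> M) (es : 'I_n -> M -> A) :
  is_bimodule lB rA -> is_dual_basis rA e es ->
  comatrix_coseparable lB rA e es -> sweedler_coseparable lB rA.
Proof. move=> HBM Hdb [g Hg]; exact: (part2_cos HBM Hdb Hg). Qed.


Theorem theorem3p5 (A B : pzRingType) (M : zmodType)
  (lB : B -> M -> M) (rA : M -> A -> M)
  (n : nat) (e : 'I_n -> M) (es : 'I_n -> M -> A) :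
  is_bimodule lB rA ->
  is_dual_basis rA e es ->
  (separable_bimodule lB rA -> comatrix_coseparable lB rA e es) /\
  (comatrix_coseparable lB rA e es -> sweedler_coseparable lB rA).
Proof.
move=> HBM Hdb; split.
- exact: part1_main.
- exact: part2_main.
Qed.
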